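(* Let $\beta>0$, $\rho>0$, fix $\tau\in\mathbb R$, and let $\Pi=\Pi(\tau,r)$ and $\hat g=\hat g(\tau/\beta,r/\beta,\rho/\beta)$ be as in the context, with $\hat g_\infty=\lim_{r\to\infty}\hat g$. Consider the six terms of $$F[\hat g,\Pi]=T_1+\dots+T_6,$$ $$T_1=4\cos(2\hat g)\frac{[\partial_\tau\Pi][\partial_r\Pi]}{\Pi^2},\ T_2=-2\cos(2\hat g)\frac{\partial_\tau\partial_r\Pi}{\Pi},\ T_3=2\sin(2\hat g)\frac{[\partial_r\Pi]^2}{\Pi^2},$$ $$T_4=-2\sin(2\hat g)\frac{[\partial_\tau\Pi]^2}{\Pi^2},\ T_5=\sin(2\hat g)\frac{\partial^2_\tau\Pi}{\Pi},\ T_6=-\sin(2\hat g)\frac{\partial^2_r\Pi}{\Pi}.$$ Then for $j=1,\dots,5$ the radial integral $\int_0^\infty dr\,r^2\,T_j$ converges, while the only possibly divergent radial integral is that of $T_6$, and its divergence is logarithmic: $r^2T_6$ is integrable on $[0,\beta]$ and $r^2T_6+\frac{2\pi\rho^2}{\beta}\sin(2\hat g_\infty)\frac1r$ is integrable on $[\beta,\infty)$, so that $\int_0^R dr\,r^2T_6=-\frac{2\pi\rho^2}{\beta}\sin(2\hat g_\infty)\log R+O(1)$ as $R\to\infty$.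
   Context: $\Pi(\tau,r)=1+\frac{\pi\rho^2}{\beta r}\frac{\sinh(2\pi r/\beta)}{\cosh(2\pi r/\beta)-\cos(2\pi\tau/\beta)}$. With $\hat\tau=\tau/\beta$, $\hat r=r/\beta$, $\hat\rho=\rho/\beta$, $\hat g(\hat\tau,\hat r,\hat\rho)=-\pi^2\hat\rho^2\sin(2\pi\hat\tau)\int_0^1\frac{ds}{s}\frac{\sinh(2\pi\hat rs)}{[\cosh(2\pi\hat rs)-\cos(2\pi\hat\tau)][\cosh(2\pi\hat rs)-\cos(2\pi\hat\tau)+\frac{\pi\hat\rho^2}{\hat rs}\sinh(2\pi\hat rs)]}$ (equivalently $\hat g=\int_0^1ds\,\frac r2\partial_\tau\log\Pi(\tau,sr)$); for fixed $\hat\tau,\hat\rho$ this has a finite limit $\hat g_\infty$ as $\hat r\to\infty$. In $T_j$, all quantities are evaluated at $(\tau,r)$, with $\hat g$ at $(\hat\tau,\hat r,\hat\rho)$; $\partial_\tau,\partial_r$ are partial derivatives of $\Pi(\tau,r)$. *)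

(* Defs.v *)
From Stdlib Require Import Reals.
From Coquelicot Require Export Coquelicot.
Open Scope R_scope.

Definition Pi (beta rho tau r : R) : R :=
  1 + PI * rho ^ 2 / (beta * r) *
      (sinh (2 * PI * r / beta) / (cosh (2 * PI * r / beta) - cos (2 * PI * tau / beta))).

Definition ghat_integrand (th rh ph s : R) : R :=
  / s * sinh (2 * PI * rh * s) /
  ((cosh (2 * PI * rh * s) - cos (2 * PI * th)) *
   (cosh (2 * PI * rh * s) - cos (2 * PI * th)
    + PI * ph ^ 2 / (rh * s) * sinh (2 * PI * rh * s))).

Definition ghat (th rh ph : R) : R :=
  - PI ^ 2 * ph ^ 2 * sin (2 * PI * th) * RInt (ghat_integrand th rh ph) 0 1.

Definition gb (beta rho tau r : R) : R := ghat (tau / beta) (r / beta) (rho / beta).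

Definition dtPi beta rho tau r := Derive (fun t => Pi beta rho t r) tau.
Definition drPi beta rho tau r := Derive (fun x => Pi beta rho tau x) r.
Definition dtrPi beta rho tau r :=
  Derive (fun t => Derive (fun x => Pi beta rho t x) r) tau.
Definition dttPi beta rho tau r :=
  Derive (fun t => Derive (fun t' => Pi beta rho t' r) t) tau.
Definition drrPi beta rho tau r :=
  Derive (fun x => Derive (fun x' => Pi beta rho tau x') x) r.

Definition T1 beta rho tau r :=
  4 * cos (2 * gb beta rho tau r) * (dtPi beta rho tau r * drPi beta rho tau r)
    / (Pi beta rho tau r) ^ 2.
Definition T2 beta rho tau r :=
  - 2 * cos (2 * gb beta rho tau r) * dtrPi beta rho tau r / Pi beta rho tau r.
Definition T3 beta rho tau r :=
  2 * sin (2 * gb beta rho tau r) * (drPi beta rho tau r) ^ 2 / (Pi beta rho tau r) ^ 2.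
Definition T4 beta rho tau r :=
  - 2 * sin (2 * gb beta rho tau r) * (dtPi beta rho tau r) ^ 2 / (Pi beta rho tau r) ^ 2.
Definition T5 beta rho tau r :=
  sin (2 * gb beta rho tau r) * dttPi beta rho tau r / Pi beta rho tau r.
Definition T6 beta rho tau r :=
  - sin (2 * gb beta rho tau r) * drrPi beta rho tau r / Pi beta rho tau r.

(* Main.v *)
Require Import Defs.
From Stdlib Require Import Reals Lra Psatz.
From Coquelicot Require Import Coquelicot.
Open Scope R_scope.

Definition Sx beta x := sinh (2*PI*x/beta).
Definition Cx beta x := cosh (2*PI*x/beta).
Definition uu beta t := cos (2*PI*t/beta).
Definition u1 beta t := - (2*PI/beta) * sin (2*PI*t/beta).
Definition u2 beta t := - ((2*PI/beta)^2) * cos (2*PI*t/beta).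
Definition DD beta t x := Cx beta x - uu beta t.

Definition fr beta rho t x :=
  PI*rho^2/beta * ((2*PI/beta)*(1 - Cx beta x * uu beta t)/(x*(DD beta t x)^2)
                   - Sx beta x/(x^2 * DD beta t x)).

Lemma cosh_ge1 y : 1 <= cosh y.
Proof.
unfold cosh. rewrite exp_Ropp. assert (H := exp_pos y).
set (E := exp y) in *.
replace ((E + / E)/2) with (1 + (E-1)^2/(2*E)) by (field; lra).
assert (0 <= (E-1)^2/(2*E)). { apply Rdiv_le_0_compat. apply pow2_ge_0. lra. } lra.
Qed.

Lemma cosh_gt1 y : y <> 0 -> 1 < cosh y.
Proof.
intros Hy. unfold cosh. rewrite exp_Ropp.
assert (H := exp_pos y).
assert (exp y <> 1).
{ intro E. apply Hy. rewrite <- exp_0 in E. apply exp_inv in E. auto. }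
set (E := exp y) in *.
replace ((E + / E)/2) with (1 + (E-1)^2/(2*E)) by (field; lra).
assert (0 < (E-1)^2/(2*E)). { apply Rdiv_lt_0_compat. assert (E - 1 <> 0) by lra.
  replace ((E-1)^2) with (Rsqr (E-1)) by (unfold Rsqr; ring). apply Rsqr_pos_lt; auto. lra. } lra.
Qed.

Definition ft beta rho t x :=
  PI*rho^2/beta * (Sx beta x * u1 beta t / (x * (DD beta t x)^2)).
Definition ftr beta rho t x :=
  PI*rho^2/beta * u1 beta t * ((2*PI/beta)*Cx beta x/(x*(DD beta t x)^2)
     - Sx beta x/(x^2*(DD beta t x)^2) - 2*(2*PI/beta)*(Sx beta x)^2/(x*(DD beta t x)^3)).
Definition ftt beta rho t x :=
  PI*rho^2/beta * (Sx beta x * (u2 beta t * DD beta t x + 2*(u1 beta t)^2)/(x*(DD beta t x)^3)).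
Definition frr beta rho t x :=
  PI*rho^2/beta * (2*Sx beta x/(x^3*DD beta t x)
     + 2*(2*PI/beta)*(Cx beta x * uu beta t - 1)/(x^2*(DD beta t x)^2)
     + (2*PI/beta)^2*Sx beta x*((uu beta t)^2 - 2 + Cx beta x * uu beta t)/(x*(DD beta t x)^3)).

Lemma DD_pos beta t x : 0 < beta -> 0 < x -> 0 < DD beta t x.
Proof.
intros Hb Hx. unfold DD, Cx, uu.
assert (1 < cosh (2*PI*x/beta)). { apply cosh_gt1.
  assert (0 < 2*PI*x/beta). { apply Rdiv_lt_0_compat; try lra. assert (H:=PI_RGT_0). nra. } lra. }
assert (H2 := COS_bound (2*PI*t/beta)). lra.
Qed.

Ltac derfin x beta t :=
  rewrite ?exp_Ropp in *;
  let HE := fresh in assert (HE := exp_pos (2*PI*x*/beta));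
  let E := fresh "E" in set (E := exp (2*PI*x*/beta)) in *;
  let c := fresh "c" in set (c := cos (2 * PI * t * / beta)) in *;
  let s := fresh "s" in set (s := sin (2 * PI * t * / beta)) in *;
  let H2 := fresh in
    assert (H2 : E*E + 1 - c*(E*2) > 0) by
      (replace (E*E + 1 - c*(E*2)) with ((2*E)*((E + / E) * / 2 - c)) by (field; lra);
       apply Rmult_lt_0_compat; lra);
  field; repeat split; lra.

Ltac derall beta t x Hb Hx :=
  let HD := fresh in assert (HD := DD_pos beta t x Hb Hx);
  unfold fr, ft, ftr, ftt, frr, DD, Sx, Cx, uu, u1, u2 in *; unfold Pi; unfold sinh, cosh in *; unfold Rdiv in *;
  auto_derive; [repeat split; try lra; repeat (apply Rmult_integral_contrapositive_currified; try lra) | derfin x beta t].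

Lemma der_r beta rho t x : 0 < beta -> 0 < x ->
  is_derive (fun x => Pi beta rho t x) x (fr beta rho t x).
Proof. intros Hb Hx. derall beta t x Hb Hx. Qed.
Lemma der_t beta rho t x : 0 < beta -> 0 < x ->
  is_derive (fun t => Pi beta rho t x) t (ft beta rho t x).
Proof. intros Hb Hx. derall beta t x Hb Hx. Qed.
Lemma der_rt beta rho t x : 0 < beta -> 0 < x ->
  is_derive (fun t => fr beta rho t x) t (ftr beta rho t x).
Proof. intros Hb Hx. derall beta t x Hb Hx. Qed.
Lemma der_rr beta rho t x : 0 < beta -> 0 < x ->
  is_derive (fun x => fr beta rho t x) x (frr beta rho t x).
Proof. intros Hb Hx. derall beta t x Hb Hx. Qed.
Lemma der_tt beta rho t x : 0 < beta -> 0 < x ->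
  is_derive (fun t => ft beta rho t x) t (ftt beta rho t x).
Proof. intros Hb Hx. derall beta t x Hb Hx. Qed.

Lemma ex_RInt_cont (f : R -> R) a b : (forall z, Rmin a b <= z <= Rmax a b -> continuous f z) -> ex_RInt f a b.
Proof. apply (@ex_RInt_continuous R_CompleteNormedModule). Qed.

Ltac nz := repeat split; try lra; repeat (apply Rmult_integral_contrapositive_currified; try lra).

Lemma cont_of_der (f:R->R) x : ex_derive f x -> continuous f x.
Proof. intro H. apply (@ex_derive_continuous R_AbsRing R_NormedModule f x H). Qed.

Lemma RInt_correctR (f:R->R) a b : ex_RInt f a b -> is_RInt f a b (RInt f a b).
Proof. apply (@RInt_correct R_CompleteNormedModule). Qed.
Lemma is_RInt_uniqueR (f:R->R) a b l : is_RInt f a b l -> RInt f a b = l.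
Proof. apply (@is_RInt_unique R_CompleteNormedModule). Qed.
Lemma RInt_ChaslesR (f:R->R) a b c : ex_RInt f a b -> ex_RInt f b c -> RInt f a b + RInt f b c = RInt f a c.
Proof. apply (@RInt_Chasles R_CompleteNormedModule). Qed.

Lemma abs_RInt_le2 (f : R -> R) a b M :
  ex_RInt f a b -> (forall t, Rmin a b <= t <= Rmax a b -> Rabs (f t) <= M) ->
  Rabs (RInt f a b) <= Rabs (b - a) * M.
Proof.
intros He Hb. destruct (Rle_dec a b) as [Hab|Hab].
- rewrite (Rabs_right (b-a)) by lra. apply abs_RInt_le_const; auto.
  intros t Ht. apply Hb. rewrite Rmin_left, Rmax_right; lra.
- assert (Hs : ex_RInt f b a) by (apply ex_RInt_swap; auto).
  rewrite <- (opp_RInt_swap f b a Hs).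
  change (Rabs (- RInt f b a) <= Rabs (b - a) * M). rewrite Rabs_Ropp.
  rewrite (Rabs_left (b-a)) by lra. replace (- (b - a)) with (a - b) by ring.
  apply abs_RInt_le_const; auto. lra.
  intros t Ht. apply Hb. rewrite Rmin_right, Rmax_left; lra.
Qed.

Lemma int_right0 (f : R -> R) (b M d : R) : 0 < d <= b ->
  (forall x, 0 < x <= b -> continuous f x) ->
  (forall x, 0 < x <= d -> Rabs (f x) <= M) ->
  ex_RInt_gen f (at_right 0) (at_point b).
Proof.
intros Hd Hc Hbd.
assert (HM : 0 <= M). { specialize (Hbd d ltac:(lra)). eapply Rle_trans; [apply Rabs_pos|eauto]. }
assert (Hex : forall a, 0 < a <= b -> ex_RInt f a b).
{ intros a Ha. apply ex_RInt_cont. intros z Hz. apply Hc.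
  rewrite Rmin_left, Rmax_right in Hz; lra. }
unfold ex_RInt_gen, is_RInt_gen.
pose proof (@filterlimi_locally_cauchy (R*R) R_CompleteSpace _
   (@filter_prod_proper _ _ _ _ (at_right_proper_filter 0) (at_point_filter b))
   (fun ab y => is_RInt f (fst ab) (snd ab) y)) as HC.
apply HC.
- apply Filter_prod with (fun a => 0 < a <= b) (fun y => y = b).
  + exists (mkposreal b ltac:(lra)). intros y Hy Hy0.
    unfold ball in Hy; simpl in Hy; unfold AbsRing_ball, abs, minus, plus, opp in Hy; simpl in Hy.
    apply Rabs_def2 in Hy. lra.
  + reflexivity.
  + intros x y Hx Hy. simpl. subst y. split.
    * exists (RInt f x b). apply RInt_correctR. apply Hex; auto.
    * intros y1 y2 H1 H2. apply is_RInt_uniqueR in H1. apply is_RInt_uniqueR in H2. congruence.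
- intros eps.
  set (eta := Rmin d (eps / (2 * (M + 1)))).
  assert (Heta : 0 < eta).
  { unfold eta. apply Rmin_case. lra. apply Rdiv_lt_0_compat. apply eps. lra. }
  assert (Heta2 : eta * M < eps).
  { assert (eta <= eps / (2*(M+1))) by apply Rmin_r.
    assert (eps / (2*(M+1)) * M < eps).
    { assert (Hp := cond_pos eps).
      replace (eps / (2*(M+1)) * M) with (eps * (M / (2*(M+1)))) by (field; lra).
      assert (M / (2*(M+1)) < 1). { apply Rmult_lt_reg_r with (2*(M+1)). lra. field_simplify; lra. }
      nra. }
    nra. }
  exists (fun ab => 0 < fst ab < eta /\ snd ab = b). split.
  + apply Filter_prod with (fun a => 0 < a < eta) (fun y => y = b).
    * exists (mkposreal eta Heta). intros y Hy Hy0.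
      unfold ball in Hy; simpl in Hy; unfold AbsRing_ball, abs, minus, plus, opp in Hy; simpl in Hy.
      apply Rabs_def2 in Hy. lra.
    * reflexivity.
    * intros x y Hx Hy. simpl. auto.
  + intros [a1 b1] [a2 b2] [Ha1 Hb1] [Ha2 Hb2] u' v' Hu Hv. simpl in *. subst b1 b2.
    assert (eta <= d) by apply Rmin_l.
    apply is_RInt_uniqueR in Hu. apply is_RInt_uniqueR in Hv. subst u' v'.
    unfold ball; simpl; unfold AbsRing_ball, abs, minus, plus, opp; simpl.
    assert (E: RInt f a2 a1 + RInt f a1 b = RInt f a2 b).
    { apply (RInt_ChaslesR f a2 a1 b).
      apply ex_RInt_cont. intros z Hz. apply Hc.
        assert (Rmin a2 a1 > 0) by (apply Rmin_case; lra).
        assert (Rmax a2 a1 <= b) by (apply Rmax_case; lra). lra.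
      apply Hex; lra. }
    replace (RInt f a2 b + - RInt f a1 b) with (RInt f a2 a1) by lra.
    eapply Rle_lt_trans. apply abs_RInt_le2 with (M := M).
    * apply ex_RInt_cont. intros z Hz. apply Hc.
        assert (Rmin a2 a1 > 0) by (apply Rmin_case; lra).
        assert (Rmax a2 a1 <= b) by (apply Rmax_case; lra). lra.
    * intros t Ht. apply Hbd.
        assert (Rmin a2 a1 > 0) by (apply Rmin_case; lra).
        assert (Rmax a2 a1 <= eta) by (apply Rmax_case; lra). lra.
    * assert (Rabs (a1 - a2) <= eta) by (apply Rabs_le; lra). nra.
Qed.

Lemma tail_bound (f : R -> R) (X M x x' : R) : 0 < X -> X <= x <= x' ->
  (forall t, x <= t <= x' -> continuous f t) ->
  (forall t, X <= t -> Rabs (f t) <= M / t^2) ->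
  Rabs (RInt f x x') <= M / x.
Proof.
intros HX Hx Hc Hb.
assert (HM : 0 <= M).
{ specialize (Hb X (Rle_refl _)). assert (0 <= M / X^2) by (eapply Rle_trans; [apply Rabs_pos|eauto]).
  assert (0 < X^2) by (apply pow_lt; lra).
  apply Rmult_le_reg_r with (/ X^2). apply Rinv_0_lt_compat; auto. rewrite Rmult_0_l. auto. }
assert (Hg : is_RInt (fun t => M / t^2) x x' (M / x - M / x')).
{ replace (M/x - M/x') with (minus ((fun t => - M / t) x') ((fun t => - M / t) x))
    by (unfold minus, plus, opp; simpl; field; lra).
  apply (@is_RInt_derive R_CompleteNormedModule).
  - intros t Ht. rewrite Rmin_left, Rmax_right in Ht by lra.
    auto_derive. nz. field. lra.
  - intros t Ht. rewrite Rmin_left, Rmax_right in Ht by lra.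
    apply cont_of_der. auto_derive. nz. }
assert (Hf : ex_RInt f x x').
{ apply ex_RInt_cont. intros z Hz. rewrite Rmin_left, Rmax_right in Hz by lra. apply Hc; lra. }
assert (Hg' : ex_RInt (fun t => M / t^2) x x') by (eexists; eauto).
apply is_RInt_uniqueR in Hg.
assert (H1 : RInt f x x' <= RInt (fun t => M / t^2) x x').
{ apply RInt_le; auto. lra. intros t Ht. specialize (Hb t ltac:(lra)). apply Rabs_le_between in Hb. lra. }
assert (H2 : RInt (fun t => - (M / t^2)) x x' <= RInt f x x').
{ apply RInt_le; auto. lra. apply ex_RInt_opp in Hg'. auto.
  intros t Ht. specialize (Hb t ltac:(lra)). apply Rabs_le_between in Hb. lra. }
rewrite (RInt_opp (V := R_CompleteNormedModule)) in H2 by auto.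
change (opp (RInt (fun t : R => M / t ^ 2) x x')) with (- (RInt (fun t : R => M / t ^ 2) x x')) in H2.
rewrite Hg in H1, H2.
assert (0 <= M / x') by (apply Rdiv_le_0_compat; lra).
apply Rabs_le. lra.
Qed.

Lemma int_infty (f : R -> R) (b X M : R) : 0 < b -> b <= X ->
  (forall x, b <= x -> continuous f x) ->
  (forall x, X <= x -> Rabs (f x) <= M / x^2) ->
  ex_RInt_gen f (at_point b) (Rbar_locally p_infty).
Proof.
intros Hb HX Hc Hbd.
assert (HM : 0 <= M).
{ specialize (Hbd X (Rle_refl _)). assert (0 <= M / X^2) by (eapply Rle_trans; [apply Rabs_pos|eauto]).
  assert (0 < X^2) by (apply pow_lt; lra).
  apply Rmult_le_reg_r with (/ X^2). apply Rinv_0_lt_compat; auto. rewrite Rmult_0_l. auto. }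
assert (Hex : forall a, b <= a -> ex_RInt f b a).
{ intros a Ha. apply ex_RInt_cont. intros z Hz. apply Hc.
  rewrite Rmin_left, Rmax_right in Hz; lra. }
unfold ex_RInt_gen, is_RInt_gen.
pose proof (@filterlimi_locally_cauchy (R*R) R_CompleteSpace _
   (@filter_prod_proper _ _ _ _ (at_point_filter b) (Rbar_locally_filter p_infty))
   (fun ab y => is_RInt f (fst ab) (snd ab) y)) as HC.
apply HC.
- apply Filter_prod with (fun y => y = b) (fun a => b <= a).
  + reflexivity.
  + exists b. intros; lra.
  + intros x y Hx Hy. simpl. subst x. split.
    * exists (RInt f b y). apply RInt_correctR. apply Hex; auto.
    * intros y1 y2 H1 H2. apply is_RInt_uniqueR in H1. apply is_RInt_uniqueR in H2. congruence.
- intros eps.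
  set (Y := Rmax X (2 * (M+1) / eps)).
  assert (HY : X <= Y) by apply Rmax_l.
  assert (HY2 : M / Y < eps).
  { assert (2*(M+1)/eps <= Y) by apply Rmax_r. assert (Hp := cond_pos eps).
    assert (0 < 2*(M+1)/eps) by (apply Rdiv_lt_0_compat; lra).
    apply Rmult_lt_reg_r with Y. lra. unfold Rdiv. rewrite Rmult_assoc, Rinv_l by lra.
    apply Rlt_le_trans with (eps * (2*(M+1)/eps)). 2: apply Rmult_le_compat_l; lra.
    replace (eps * (2*(M+1)/eps)) with (2*(M+1)) by (field; lra). lra. }
  exists (fun ab => fst ab = b /\ Y <= snd ab). split.
  + apply Filter_prod with (fun y => y = b) (fun a => Y <= a).
    * reflexivity.
    * exists Y. intros; lra.
    * intros x y Hx Hy. simpl. auto.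
  + intros [a1 b1] [a2 b2] [Ha1 Hb1] [Ha2 Hb2] u' v' Hu Hv. simpl in *. subst a1 a2.
    apply is_RInt_uniqueR in Hu. apply is_RInt_uniqueR in Hv. subst u' v'.
    unfold ball; simpl; unfold AbsRing_ball, abs, minus, plus, opp; simpl.
    assert (E: RInt f b b1 + RInt f b1 b2 = RInt f b b2).
    { apply (RInt_ChaslesR f b b1 b2). apply Hex; lra.
      apply ex_RInt_cont. intros z Hz. apply Hc.
      assert (Rmin b1 b2 >= b) by (apply Rmin_case; lra). lra. }
    replace (RInt f b b2 + - RInt f b b1) with (RInt f b1 b2) by lra.
    assert (0 < X) by lra.
    destruct (Rle_dec b1 b2).
    * eapply Rle_lt_trans. apply (tail_bound f X M b1 b2); auto. lra.
      intros t Ht; apply Hc; lra.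
      apply Rle_lt_trans with (M / Y); auto.
      unfold Rdiv. apply Rmult_le_compat_l; auto. apply Rinv_le_contravar; lra.
    * assert (Hs : ex_RInt f b1 b2). { apply ex_RInt_cont. intros z Hz. apply Hc.
        assert (Rmin b1 b2 >= b) by (apply Rmin_case; lra). lra. }
      assert (Hs' : ex_RInt f b2 b1) by (apply ex_RInt_swap; auto).
      rewrite <- (opp_RInt_swap f b2 b1 Hs').
      change (Rabs (- RInt f b2 b1) < eps). rewrite Rabs_Ropp.
      eapply Rle_lt_trans. apply (tail_bound f X M b2 b1); auto. lra.
      intros t Ht; apply Hc; lra.
      apply Rle_lt_trans with (M / Y); auto.
      unfold Rdiv. apply Rmult_le_compat_l; auto. apply Rinv_le_contravar; lra.
Qed.

Lemma contR_plus (f g : R -> R) x : continuous f x -> continuous g x -> continuous (fun y => f y + g y) x.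
Proof. intros H1 H2. apply (@continuous_plus R_UniformSpace R_AbsRing R_NormedModule f g x H1 H2). Qed.
Lemma contR_mult (f g : R -> R) x : continuous f x -> continuous g x -> continuous (fun y => f y * g y) x.
Proof. intros H1 H2. apply (@continuous_mult R_UniformSpace R_AbsRing f g x H1 H2). Qed.

Definition good0 (f : R -> R) := (forall x, 0 < x -> continuous f x) /\
  exists M d, 0 < d /\ forall x, 0 < x <= d -> Rabs (f x) <= M.
Definition goodI (f : R -> R) := exists M X, 0 < X /\ forall x, X <= x -> Rabs (f x) <= M / x^2.

Lemma goodI_max f b : goodI f -> exists M X, b <= X /\ 0 < X /\ forall x, X <= x -> Rabs (f x) <= M / x^2.
Proof. intros (M & X & HX & H). exists M, (Rmax X b). split. apply Rmax_r. split.
  eapply Rlt_le_trans; [|apply Rmax_l]; auto.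
  intros x Hx. apply H. eapply Rle_trans; [apply Rmax_l|eauto]. Qed.

Lemma at_right_gen f b : 0 < b -> good0 f -> ex_RInt_gen f (at_right 0) (at_point b).
Proof.
intros Hb [Hc (M & d & Hd & H)]. apply int_right0 with M (Rmin d b).
split. apply Rmin_case; lra. apply Rmin_r.
intros x Hx; apply Hc; lra. intros x Hx; apply H. split. lra. eapply Rle_trans; [apply Hx|apply Rmin_l].
Qed.

Lemma at_infty_gen f b : 0 < b -> (forall x, 0 < x -> continuous f x) -> goodI f ->
  ex_RInt_gen f (at_point b) (Rbar_locally p_infty).
Proof.
intros Hb Hc HI. destruct (goodI_max f b HI) as (M & X & H1 & H2 & H3).
apply int_infty with X M; auto. intros x Hx; apply Hc; lra.
Qed.

Lemma full_gen f : good0 f -> goodI f -> ex_RInt_gen f (at_right 0) (Rbar_locally p_infty).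
Proof.
intros H0 HI.
destruct (at_right_gen f 1 ltac:(lra) H0) as [l1 Hl1].
destruct (at_infty_gen f 1 ltac:(lra) (proj1 H0) HI) as [l2 Hl2].
exists (plus l1 l2). eapply is_RInt_gen_Chasles; eauto.
Qed.

Lemma final (f1 f2 f3 f4 f5 f6 : R -> R) (beta c s : R) : 0 < beta ->
  good0 f1 -> goodI f1 -> good0 f2 -> goodI f2 -> good0 f3 -> goodI f3 ->
  good0 f4 -> goodI f4 -> good0 f5 -> goodI f5 -> good0 f6 -> goodI (fun r => f6 r + c * s * / r) ->
  ex_RInt_gen f1 (at_right 0) (Rbar_locally p_infty) /\
  ex_RInt_gen f2 (at_right 0) (Rbar_locally p_infty) /\
  ex_RInt_gen f3 (at_right 0) (Rbar_locally p_infty) /\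
  ex_RInt_gen f4 (at_right 0) (Rbar_locally p_infty) /\
  ex_RInt_gen f5 (at_right 0) (Rbar_locally p_infty) /\
  ex_RInt_gen f6 (at_right 0) (at_point beta) /\
  ex_RInt_gen (fun r => f6 r + c * s * / r) (at_point beta) (Rbar_locally p_infty) /\
  (exists R0 C : R, forall Rr : R, R0 <= Rr ->
     exists v : R,
       is_RInt_gen f6 (at_right 0) (at_point Rr) v /\
       Rabs (v - (- c * s * ln Rr)) <= C).
Proof.
intros Hb G1 I1 G2 I2 G3 I3 G4 I4 G5 I5 G6 I6.
assert (Hcg : forall x, 0 < x -> continuous (fun r => f6 r + c * s * / r) x).
{ intros x Hx. apply contR_plus. apply (proj1 G6); auto. apply cont_of_der. auto_derive. lra. }
repeat split; try (apply full_gen; auto).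
- apply at_right_gen; auto.
- apply at_infty_gen; auto.
- destruct (at_right_gen f6 beta Hb G6) as [L0 HL0].
  destruct (goodI_max _ beta I6) as (M & X & H1 & H2 & H3).
  set (g := fun r => f6 r + c * s * / r) in *.
  assert (Hexg : forall a b, 0 < a -> 0 < b -> ex_RInt g a b).
  { intros a b Ha Hb'. apply ex_RInt_cont. intros z Hz. apply Hcg.
    assert (Rmin a b > 0) by (apply Rmin_case; lra). lra. }
  exists X, (Rabs L0 + Rabs (RInt g beta X) + M / X + Rabs (c * s * ln beta)).
  intros Rr HR.
  assert (Hex6 : ex_RInt f6 beta Rr).
  { apply ex_RInt_cont. intros z Hz. apply (proj1 G6).
    assert (Rmin beta Rr > 0) by (apply Rmin_case; lra). lra. }
  exists (L0 + RInt f6 beta Rr). split.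
  + change (L0 + RInt f6 beta Rr) with (plus L0 (RInt f6 beta Rr)).
    eapply is_RInt_gen_Chasles; eauto.
    apply is_RInt_gen_at_point. apply RInt_correctR; auto.
  + assert (Hln : is_RInt (fun r => c * s * / r) beta Rr (c * s * ln Rr - c * s * ln beta)).
    { change (c * s * ln Rr - c * s * ln beta) with (minus ((fun r => c*s*ln r) Rr) ((fun r => c*s*ln r) beta)).
      apply (@is_RInt_derive R_CompleteNormedModule).
      - intros t Ht. rewrite Rmin_left, Rmax_right in Ht by lra. auto_derive. lra. field. lra.
      - intros t Ht. rewrite Rmin_left, Rmax_right in Ht by lra. apply cont_of_der. auto_derive. lra. }
    assert (E1 : RInt g beta Rr = RInt f6 beta Rr + (c * s * ln Rr - c * s * ln beta)).
    { unfold g. rewrite (RInt_plus (V := R_CompleteNormedModule)); auto.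
      rewrite (is_RInt_uniqueR _ _ _ _ Hln). reflexivity. eexists; eauto. }
    assert (E2 : RInt g beta X + RInt g X Rr = RInt g beta Rr).
    { apply RInt_ChaslesR; apply Hexg; lra. }
    assert (B : Rabs (RInt g X Rr) <= M / X).
    { apply (tail_bound g X M X Rr); auto. lra. intros t Ht; apply Hcg; lra. }
    replace (L0 + RInt f6 beta Rr - - c * s * ln Rr) with
      (L0 + RInt g beta X + RInt g X Rr + c * s * ln beta) by lra.
    eapply Rle_trans. apply Rabs_triang.
    eapply Rle_trans. apply Rplus_le_compat_r. apply Rabs_triang.
    eapply Rle_trans. apply Rplus_le_compat_r. apply Rplus_le_compat_r. apply Rabs_triang.
    lra.
Qed.

Lemma dtPi_eq beta rho tau x : 0 < beta -> 0 < x -> dtPi beta rho tau x = ft beta rho tau x.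
Proof. intros. unfold dtPi. apply is_derive_unique. apply der_t; auto. Qed.
Lemma drPi_eq beta rho tau x : 0 < beta -> 0 < x -> drPi beta rho tau x = fr beta rho tau x.
Proof. intros. unfold drPi. apply is_derive_unique. apply der_r; auto. Qed.
Lemma dtrPi_eq beta rho tau x : 0 < beta -> 0 < x -> dtrPi beta rho tau x = ftr beta rho tau x.
Proof. intros. unfold dtrPi.
  rewrite (Derive_ext _ (fun t => fr beta rho t x)).
  apply is_derive_unique. apply der_rt; auto.
  intros t. apply is_derive_unique. apply der_r; auto. Qed.
Lemma dttPi_eq beta rho tau x : 0 < beta -> 0 < x -> dttPi beta rho tau x = ftt beta rho tau x.
Proof. intros. unfold dttPi.
  rewrite (Derive_ext _ (fun t => ft beta rho t x)).
  apply is_derive_unique. apply der_tt; auto.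
  intros t. apply is_derive_unique. apply der_t; auto. Qed.
Lemma drrPi_eq beta rho tau x : 0 < beta -> 0 < x -> drrPi beta rho tau x = frr beta rho tau x.
Proof. intros Hb Hx. unfold drrPi.
  rewrite (Derive_ext_loc _ (fun y => fr beta rho tau y)).
  apply is_derive_unique. apply der_rr; auto.
  exists (mkposreal x Hx). intros y Hy.
  unfold ball in Hy; simpl in Hy; unfold AbsRing_ball, abs, minus, plus, opp in Hy; simpl in Hy.
  apply Rabs_def2 in Hy.
  apply is_derive_unique. apply der_r; auto. lra. Qed.

Lemma gb_zero beta rho tau r : sin (2 * PI * tau / beta) = 0 -> gb beta rho tau r = 0.
Proof. intros H. unfold gb, ghat. replace (2 * PI * (tau / beta)) with (2 * PI * tau / beta) by (unfold Rdiv; ring).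
  rewrite H. ring. Qed.

Lemma good_zero (f : R -> R) : (forall x, 0 < x -> f x = 0) -> good0 f /\ goodI f.
Proof.
intros H. split. split.
- intros x Hx. apply continuous_ext_loc with (fun _ => 0).
  exists (mkposreal x Hx). intros y Hy.
  unfold ball in Hy; simpl in Hy; unfold AbsRing_ball, abs, minus, plus, opp in Hy; simpl in Hy.
  apply Rabs_def2 in Hy. rewrite H; auto. lra.
  apply continuous_const.
- exists 0, 1. split. lra. intros x Hx. rewrite H by lra. rewrite Rabs_R0. lra.
- exists 0, 1. split. lra. intros x Hx. rewrite H by lra. rewrite Rabs_R0. unfold Rdiv. lra.
Qed.

Lemma contR_comp (f g : R -> R) x : continuous f x -> continuous g (f x) -> continuous (fun y => g (f y)) x.
Proof. intros H1 H2. apply (@continuous_comp R_UniformSpace R_UniformSpace R_UniformSpace f g x H1 H2). Qed.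
Lemma contR_const (c : R) x : continuous (fun _ : R => c) x.
Proof. apply (@continuous_const R_UniformSpace R_UniformSpace). Qed.
Lemma contR_id x : continuous (fun y : R => y) x.
Proof. apply (@continuous_id R_UniformSpace). Qed.
Lemma contR_inv (f : R -> R) x : continuous f x -> f x <> 0 -> continuous (fun y => / f y) x.
Proof. intros H1 H2. apply (contR_comp f (fun z => / z)); auto. apply cont_of_der. auto_derive. auto. Qed.
Lemma contR_opp (f : R -> R) x : continuous f x -> continuous (fun y => - f y) x.
Proof. intros H1. apply (contR_comp f (fun z => - z)); auto. apply cont_of_der. auto_derive. auto. Qed.
Lemma contR_minus (f g : R -> R) x : continuous f x -> continuous g x -> continuous (fun y => f y - g y) x.
Proof. intros. unfold Rminus. apply contR_plus; auto. apply contR_opp; auto. Qed.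
Lemma contR_ext (f g : R -> R) x d : 0 < d -> (forall y, Rabs (y - x) < d -> f y = g y) -> continuous f x -> continuous g x.
Proof. intros Hd H Hc. apply continuous_ext_loc with f; auto.
  exists (mkposreal d Hd). intros y Hy.
  unfold ball in Hy; simpl in Hy; unfold AbsRing_ball, abs, minus, plus, opp in Hy; simpl in Hy. auto. Qed.

Definition Sh (u : R) : R := if Req_dec_T u 0 then 2 * PI else sinh (2 * PI * u) / u.

Lemma Sh_nz u : u <> 0 -> Sh u = sinh (2 * PI * u) / u.
Proof. intros H. unfold Sh. destruct (Req_dec_T u 0); tauto. Qed.
Lemma Sh_0 : Sh 0 = 2 * PI.
Proof. unfold Sh. destruct (Req_dec_T 0 0); tauto. Qed.

Lemma sinh_pos y : 0 < y -> 0 < sinh y.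
Proof. intros H. unfold sinh. assert (exp (-y) < exp y) by (apply exp_increasing; lra). lra. Qed.
Lemma sinh_neg y : y < 0 -> sinh y < 0.
Proof. intros H. unfold sinh. assert (exp y < exp (-y)) by (apply exp_increasing; lra). lra. Qed.

Lemma Sh_pos u : 0 < Sh u.
Proof.
assert (HP := PI_RGT_0).
destruct (Req_dec_T u 0) as [e|n].
- subst. rewrite Sh_0. lra.
- rewrite Sh_nz by auto. destruct (Rlt_dec 0 u).
  + apply Rdiv_lt_0_compat; auto. apply sinh_pos. nra.
  + assert (u < 0) by lra. assert (sinh (2*PI*u) < 0) by (apply sinh_neg; nra).
    unfold Rdiv. replace (sinh (2 * PI * u) * / u) with ((- sinh (2 * PI * u)) * / (- u)) by (field; auto).
    apply Rmult_lt_0_compat. lra. apply Rinv_0_lt_compat. lra.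
Qed.

Lemma Sh_cont u : continuous Sh u.
Proof.
destruct (Req_dec_T u 0) as [e|n].
- subst. apply continuity_pt_filterlim.
  assert (Hd : derivable_pt_lim (fun u => sinh (2 * PI * u)) 0 (2 * PI)).
  { apply is_derive_Reals. unfold sinh. auto_derive. auto. rewrite Rmult_0_r, Ropp_0, exp_0. field. }
  intros eps Heps. destruct (Hd eps Heps) as [del Hdel].
  exists del. split. apply cond_pos. intros x [[_ Hx] Hdx].
  simpl in *. unfold R_dist in *. rewrite Sh_0.
  rewrite Sh_nz by auto.
  specialize (Hdel x (not_eq_sym Hx)). rewrite Rminus_0_r in Hdx. specialize (Hdel Hdx).
  rewrite Rplus_0_l, Rmult_0_r in Hdel. unfold sinh at 2 in Hdel. rewrite Ropp_0, exp_0 in Hdel.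
  replace ((1 - 1) / 2) with 0 in Hdel by field. rewrite Rminus_0_r in Hdel. auto.
- apply contR_ext with (fun y => sinh (2 * PI * y) / y) (Rabs u).
  apply Rabs_pos_lt; auto.
  intros y Hy. rewrite Sh_nz. auto. intro; subst. rewrite Rminus_0_l, Rabs_Ropp in Hy. lra.
  apply cont_of_der. unfold sinh. auto_derive. auto.
Qed.

Definition psi c ph u := Sh u / ((cosh (2*PI*u) - c) * (cosh (2*PI*u) - c + PI * ph^2 * Sh u)).

Lemma psi_den_pos c ph u : c < 1 -> 0 < cosh (2*PI*u) - c /\ 0 < cosh (2*PI*u) - c + PI * ph^2 * Sh u.
Proof. intros Hc. assert (H := cosh_ge1 (2*PI*u)). assert (H1 := Sh_pos u).
  assert (0 <= PI * ph^2 * Sh u). { assert (HP := PI_RGT_0). assert (0 <= ph^2) by apply pow2_ge_0.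
  apply Rmult_le_pos; [apply Rmult_le_pos|]; lra. } lra. Qed.

Lemma psi_cont c ph u : c < 1 -> continuous (psi c ph) u.
Proof.
intros Hc. destruct (psi_den_pos c ph u Hc) as [H1 H2].
unfold psi, Rdiv. apply contR_mult. apply Sh_cont.
assert (Hch : continuous (fun y => cosh (2*PI*y)) u) by (apply cont_of_der; unfold cosh; auto_derive; auto).
apply contR_inv. 2: apply Rmult_integral_contrapositive_currified; lra.
apply contR_mult. apply contR_minus; auto. apply contR_const.
apply contR_plus. apply contR_minus; auto. apply contR_const.
apply contR_mult. apply contR_const. apply Sh_cont.
Qed.

Lemma integrand_eq th rh ph s : 0 < s -> 0 < rh -> cos (2*PI*th) < 1 ->
  ghat_integrand th rh ph s = rh * psi (cos (2*PI*th)) ph (rh * s).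
Proof.
intros Hs Hr Hc. unfold ghat_integrand, psi.
assert (Hrs : rh * s <> 0) by (apply Rmult_integral_contrapositive_currified; lra).
destruct (psi_den_pos (cos (2*PI*th)) ph (rh*s) Hc) as [H1 H2].
rewrite Sh_nz in * by auto.
replace (2 * PI * (rh * s)) with (2 * PI * rh * s) in * by ring.
field. repeat split; try lra.
assert (0 < rh * s) by nra.
replace ((cosh (2 * PI * rh * s) - cos (2 * PI * th)) * (rh * s) + PI * ph ^ 2 * sinh (2 * PI * rh * s))
 with ((rh * s) * (cosh (2 * PI * rh * s) - cos (2 * PI * th) + PI * ph ^ 2 * (sinh (2 * PI * rh * s) / (rh * s)))) by (field; repeat split; lra).
apply Rgt_not_eq. apply Rmult_lt_0_compat; lra.
Qed.

Lemma RInt_psi_eq th rh ph : 0 < rh -> cos (2*PI*th) < 1 ->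
  RInt (ghat_integrand th rh ph) 0 1 = RInt (psi (cos (2*PI*th)) ph) 0 rh.
Proof.
intros Hr Hc.
rewrite (RInt_ext _ (fun s => scal rh (psi (cos (2*PI*th)) ph (rh * s + 0)))).
rewrite (RInt_comp_lin (V := R_CompleteNormedModule)).
replace (rh * 0 + 0) with 0 by ring. replace (rh * 1 + 0) with rh by ring. reflexivity.
apply ex_RInt_cont. intros z Hz. apply psi_cont; auto.
intros x Hx. rewrite Rmin_left, Rmax_right in Hx by lra.
rewrite Rplus_0_r. apply integrand_eq; auto. lra.
Qed.

Lemma cosh_lb y : 0 <= y -> (1 + y) / 2 <= cosh y.
Proof. intros H. unfold cosh. assert (H1 := exp_ineq1_le y). assert (0 < exp (-y)) by apply exp_pos. lra. Qed.
Lemma sinh_le_cosh y : sinh y <= cosh y.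
Proof. unfold sinh, cosh. assert (0 < exp (-y)) by apply exp_pos. lra. Qed.

Lemma psi_bound c ph u : c < 1 -> 1 <= u -> Rabs (psi c ph u) <= (4 / PI) / u^2.
Proof.
intros Hc Hu. assert (HP := PI_RGT_0).
destruct (psi_den_pos c ph u Hc) as [H1 H2].
unfold psi. rewrite Sh_nz by lra.
set (C := cosh (2*PI*u)) in *. set (S := sinh (2*PI*u)) in *.
assert (HS : 0 < S) by (apply sinh_pos; nra).
assert (HSC : S <= C) by apply sinh_le_cosh.
assert (HC1 : (1 + 2*PI*u)/2 <= C) by (apply cosh_lb; nra).
assert (H3 : 3 < PI) by (assert (H := PI2_3_2); lra).
assert (HD : C / 2 <= C - c) by nra.
set (a := S / u) in *. set (k := PI * ph^2) in *.
assert (Hk : 0 <= k) by (unfold k; assert (0 <= ph^2) by apply pow2_ge_0; nra).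
assert (Ha : 0 < a) by (unfold a; apply Rdiv_lt_0_compat; lra).
assert (Hau : a * u <= C) by (unfold a; replace (S / u * u) with S by (field; lra); lra).
set (Q := (C - c) * (C - c + k * a)).
assert (Hka : 0 <= k * a) by nra.
assert (HC0 : 0 < C / 2) by nra.
assert (HQ : C * C / 4 <= Q).
{ unfold Q. assert (C/2 * (C/2) <= (C - c) * (C - c)) by (apply Rmult_le_compat; lra).
  assert (0 <= (C - c) * (k * a)) by (apply Rmult_le_pos; lra). nra. }
assert (HQp : 0 < Q) by nra.
assert (Hfin : a / Q <= 4 / PI / u^2).
{ unfold Rdiv. apply Rmult_le_reg_r with (Q * (PI * u^2)).
  apply Rmult_lt_0_compat; auto. nra.
  replace (a * /Q * (Q*(PI*u^2))) with (a*(PI*u^2)) by (field; lra).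
  replace (4 * /PI * /u^2 * (Q*(PI*u^2))) with (4*Q) by (field; split; lra).
  assert (PI * u <= C) by nra.
  assert ((a*u)*(PI*u) <= C*C) by (apply Rmult_le_compat; nra).
  replace (a*(PI*u^2)) with ((a*u)*(PI*u)) by ring. lra. }
rewrite Rabs_right. auto. apply Rle_ge. apply Rlt_le. apply Rdiv_lt_0_compat; auto.
Qed.

Definition Gf c ph v := RInt (psi c ph) 0 v.

Lemma Gf_der c ph v : c < 1 -> is_derive (Gf c ph) v (psi c ph v).
Proof.
intros Hc. apply (@is_derive_RInt R_CompleteNormedModule (psi c ph) (Gf c ph) 0 v).
- exists (mkposreal 1 Rlt_0_1). intros y _. unfold Gf. apply RInt_correctR.
  apply ex_RInt_cont. intros; apply psi_cont; auto.
- apply psi_cont; auto.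
Qed.

Lemma Gf_cont c ph v : c < 1 -> continuous (Gf c ph) v.
Proof. intros Hc. apply cont_of_der. eexists. apply Gf_der; auto. Qed.

Lemma gb_eq beta rho tau r : 0 < beta -> 0 < r -> cos (2*PI*(tau/beta)) < 1 ->
  gb beta rho tau r = (- PI^2 * (rho/beta)^2 * sin (2*PI*(tau/beta))) *
     Gf (cos (2*PI*(tau/beta))) (rho/beta) (r/beta).
Proof.
intros Hb Hr Hc. unfold gb, ghat, Gf. rewrite RInt_psi_eq; auto.
apply Rdiv_lt_0_compat; auto.
Qed.

Lemma gb_cont beta rho tau r : 0 < beta -> 0 < r -> cos (2*PI*(tau/beta)) < 1 ->
  continuous (gb beta rho tau) r.
Proof.
intros Hb Hr Hc.
apply contR_ext with (fun r => (- PI^2 * (rho/beta)^2 * sin (2*PI*(tau/beta))) *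
     Gf (cos (2*PI*(tau/beta))) (rho/beta) (r/beta)) r; auto.
intros y Hy. apply Rabs_def2 in Hy. rewrite gb_eq; auto. lra.
apply contR_mult. apply contR_const.
apply (contR_comp (fun r => r / beta) (Gf (cos (2 * PI * (tau / beta))) (rho / beta))).
apply cont_of_der. auto_derive. lra.
apply Gf_cont; auto.
Qed.

Lemma gb_rate beta rho tau r r' : 0 < beta -> beta <= r <= r' -> cos (2*PI*(tau/beta)) < 1 ->
  Rabs (gb beta rho tau r' - gb beta rho tau r) <=
  Rabs (- PI^2 * (rho/beta)^2 * sin (2*PI*(tau/beta))) * (4 / PI) * beta / r.
Proof.
intros Hb Hr Hc. rewrite !gb_eq by (auto; lra).
set (K := - PI^2 * (rho/beta)^2 * sin (2*PI*(tau/beta))).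
set (c := cos (2 * PI * (tau / beta))) in *. set (ph := rho/beta).
rewrite <- Rmult_minus_distr_l, Rabs_mult.
assert (E : Gf c ph (r/beta) + RInt (psi c ph) (r/beta) (r'/beta) = Gf c ph (r'/beta)).
{ unfold Gf. apply RInt_ChaslesR; apply ex_RInt_cont; intros; apply psi_cont; auto. }
replace (Gf c ph (r' / beta) - Gf c ph (r / beta)) with (RInt (psi c ph) (r/beta) (r'/beta)) by lra.
assert (B : Rabs (RInt (psi c ph) (r / beta) (r' / beta)) <= (4/PI) / (r/beta)).
{ apply tail_bound with 1. lra.
  split. apply Rmult_le_reg_r with beta; auto. unfold Rdiv; rewrite Rmult_assoc, Rinv_l; lra.
  unfold Rdiv; apply Rmult_le_compat_r. left; apply Rinv_0_lt_compat; auto. lra.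
  intros; apply psi_cont; auto.
  intros t Ht. apply psi_bound; auto. }
replace (Rabs K * (4 / PI) * beta / r) with (Rabs K * ((4/PI) / (r/beta))) by (field; split; try lra; apply PI_neq0).
apply Rmult_le_compat_l. apply Rabs_pos. auto.
Qed.

Lemma gb_lim beta rho tau (ginf : R) r : 0 < beta -> beta <= r -> cos (2*PI*(tau/beta)) < 1 ->
  is_lim (gb beta rho tau) p_infty ginf ->
  Rabs (gb beta rho tau r - ginf) <=
  Rabs (- PI^2 * (rho/beta)^2 * sin (2*PI*(tau/beta))) * (4 / PI) * beta / r.
Proof.
intros Hb Hr Hc Hl.
apply Rle_plus_epsilon. intros eps Heps.
apply is_lim_spec in Hl. destruct (Hl (mkposreal eps Heps)) as [M HM].
set (r' := Rmax r (M + 1)).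
assert (Hr' : r <= r') by apply Rmax_l.
assert (HM' : M < r') by (assert (M + 1 <= r') by apply Rmax_r; lra).
specialize (HM r' HM'). simpl in HM.
assert (HR := gb_rate beta rho tau r r' Hb (conj Hr Hr') Hc).
replace (gb beta rho tau r - ginf) with (- (gb beta rho tau r' - gb beta rho tau r) + (gb beta rho tau r' - ginf)) by ring.
eapply Rle_trans. apply Rabs_triang. rewrite Rabs_Ropp. lra.
Qed.

Definition dec (n : nat) (f : R -> R) := exists M X, 1 <= X /\ forall x, X <= x -> Rabs (f x) <= M / x^n.

Lemma dec_goodI f : dec 2 f -> goodI f.
Proof. intros (M & X & HX & H). exists M, X. split. lra. auto. Qed.

Lemma dec_M_nonneg n f M X : 1 <= X -> (forall x, X <= x -> Rabs (f x) <= M / x^n) -> 0 <= M.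
Proof. intros HX H. specialize (H X (Rle_refl _)).
  assert (0 < X^n) by (apply pow_lt; lra).
  assert (0 <= M / X^n) by (eapply Rle_trans; [apply Rabs_pos|eauto]).
  apply Rmult_le_reg_r with (/ X^n). apply Rinv_0_lt_compat; auto. rewrite Rmult_0_l. auto. Qed.

Lemma dec_ext n f g : dec n f -> (forall x, 1 <= x -> f x = g x) -> dec n g.
Proof. intros (M & X & HX & H) E. exists M, X. split; auto. intros x Hx. rewrite <- E by lra. auto. Qed.

Lemma dec_plus n f g : dec n f -> dec n g -> dec n (fun x => f x + g x).
Proof. intros (M1 & X1 & H1 & B1) (M2 & X2 & H2 & B2). exists (M1 + M2), (Rmax X1 X2).
  split. eapply Rle_trans; [apply H1|apply Rmax_l].
  intros x Hx. assert (X1 <= x) by (eapply Rle_trans; [apply Rmax_l|eauto]).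
  assert (X2 <= x) by (eapply Rle_trans; [apply Rmax_r|eauto]).
  eapply Rle_trans. apply Rabs_triang. specialize (B1 x H). specialize (B2 x H0).
  unfold Rdiv in *. lra. Qed.

Lemma dec_opp n f : dec n f -> dec n (fun x => - f x).
Proof. intros (M & X & HX & H). exists M, X. split; auto. intros x Hx. rewrite Rabs_Ropp. auto. Qed.

Lemma dec_minus n f g : dec n f -> dec n g -> dec n (fun x => f x - g x).
Proof. intros. unfold Rminus. apply dec_plus; auto. apply dec_opp; auto. Qed.

Lemma dec_mult n m f g : dec n f -> dec m g -> dec (n + m) (fun x => f x * g x).
Proof. intros (M1 & X1 & H1 & B1) (M2 & X2 & H2 & B2). exists (M1 * M2), (Rmax X1 X2).
  split. eapply Rle_trans; [apply H1|apply Rmax_l].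
  intros x Hx. assert (X1 <= x) by (eapply Rle_trans; [apply Rmax_l|eauto]).
  assert (X2 <= x) by (eapply Rle_trans; [apply Rmax_r|eauto]).
  specialize (B1 x H). specialize (B2 x H0). rewrite Rabs_mult.
  replace (M1 * M2 / x ^ (n + m)) with ((M1 / x^n) * (M2 / x^m)) by (rewrite pow_add; field; split; apply pow_nonzero; lra).
  apply Rmult_le_compat; auto; apply Rabs_pos. Qed.

Lemma dec_mult_l n f g : dec n f -> dec 0 g -> dec n (fun x => f x * g x).
Proof. intros. replace n with (n + 0)%nat by lia. apply dec_mult; auto. Qed.
Lemma dec_mult_r n f g : dec 0 f -> dec n g -> dec n (fun x => f x * g x).
Proof. intros. replace n with (0 + n)%nat by lia. apply dec_mult; auto. Qed.

Lemma dec_const c : dec 0 (fun _ => c).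
Proof. exists (Rabs c), 1. split. lra. intros. simpl. unfold Rdiv. rewrite Rinv_1, Rmult_1_r. lra. Qed.

Lemma dec_weak n f : dec (S n) f -> dec n f.
Proof. intros (M & X & HX & H). assert (HM := dec_M_nonneg _ _ _ _ HX H). exists M, X. split; auto.
  intros x Hx. eapply Rle_trans. apply H; auto.
  assert (0 < x^n) by (apply pow_lt; lra).
  unfold Rdiv. apply Rmult_le_compat_l; auto. apply Rinv_le_contravar; auto.
  simpl. replace (x^n) with (1 * x^n) at 1 by ring. apply Rmult_le_compat_r; lra. Qed.

Lemma dec_x n f : dec (S n) f -> dec n (fun x => x * f x).
Proof. intros (M & X & HX & H). exists M, X. split; auto.
  intros x Hx. rewrite Rabs_mult, Rabs_right by lra.
  specialize (H x Hx). simpl in H.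
  replace (M / x^n) with (x * (M / (x * x^n))) by (field; split; try apply pow_nonzero; lra).
  apply Rmult_le_compat_l; lra. Qed.

Lemma dec_inv_pow n : dec n (fun x => / x^n).
Proof. exists 1, 1. split. lra. intros x Hx. rewrite Rabs_right. unfold Rdiv; lra.
  apply Rle_ge. left. apply Rinv_0_lt_compat. apply pow_lt. lra. Qed.

Lemma dec_inv_x : dec 1 (fun x => / x).
Proof. eapply dec_ext. apply (dec_inv_pow 1). intros. simpl. rewrite Rmult_1_r. auto. Qed.

Lemma dec_bound0 f K X : (forall x, X <= x -> Rabs (f x) <= K) -> dec 0 f.
Proof. intros H. exists K, (Rmax X 1). split. apply Rmax_r. intros x Hx. simpl. unfold Rdiv. rewrite Rinv_1, Rmult_1_r.
  apply H. eapply Rle_trans; [apply Rmax_l|eauto]. Qed.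

Lemma exp_pow_nat n z : exp (INR n * z) = exp z ^ n.
Proof. induction n. simpl. rewrite Rmult_0_l. apply exp_0.
  rewrite S_INR, Rmult_plus_distr_r, Rmult_1_l, exp_plus, IHn. simpl. ring. Qed.

Lemma exp_lb_pow n y : 0 <= y -> (y / INR (S n)) ^ (S n) <= exp y.
Proof. intros Hy. assert (HN : 0 < INR (S n)) by (apply lt_0_INR; lia).
  replace y with (INR (S n) * (y / INR (S n))) at 2 by (field; lra).
  rewrite exp_pow_nat. apply pow_incr. split.
  apply Rdiv_le_0_compat; lra. assert (H := exp_ineq1_le (y / INR (S n))). lra. Qed.

Lemma dec_exp f k K X n : 0 < k -> (forall x, X <= x -> Rabs (f x) <= K * / exp (k * x)) -> dec n f.
Proof.
intros Hk H. set (N := INR (S n)). assert (HN : 0 < N) by (apply lt_0_INR; lia).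
assert (HK : forall x, X <= x -> 0 <= K).
{ intros x Hx. specialize (H x Hx). assert (0 < / exp (k*x)) by (apply Rinv_0_lt_compat; apply exp_pos).
  assert (0 <= K * / exp (k*x)) by (eapply Rle_trans; [apply Rabs_pos|eauto]).
  apply Rmult_le_reg_r with (/ exp (k*x)); auto. lra. }
exists (K * (N / k)^(S n)), (Rmax X 1). split. apply Rmax_r.
intros x Hx. assert (HX : X <= x) by (eapply Rle_trans; [apply Rmax_l|eauto]).
assert (H1 : 1 <= x) by (eapply Rle_trans; [apply Rmax_r|eauto]).
specialize (HK x HX).
eapply Rle_trans. apply H; auto.
assert (E := exp_lb_pow n (k * x) ltac:(nra)). fold N in E.
assert (0 < (k * x / N) ^ S n) by (apply pow_lt; apply Rdiv_lt_0_compat; nra).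
assert (Hinv : / exp (k*x) <= / (k * x / N) ^ S n) by (apply Rinv_le_contravar; auto).
replace (K * (N / k) ^ S n / x ^ n) with (K * ((N / k) ^ S n / x ^ n)) by (unfold Rdiv; ring).
apply Rmult_le_compat_l; auto.
eapply Rle_trans. apply Hinv.
rewrite Rinv_pow by (apply Rgt_not_eq; apply Rdiv_lt_0_compat; nra).
replace (/ (k * x / N)) with ((N / k) * / x) by (field; repeat split; lra).
rewrite Rpow_mult_distr. unfold Rdiv. apply Rmult_le_compat_l.
apply pow_le. apply Rmult_le_pos; [lra|left; apply Rinv_0_lt_compat; auto].
rewrite <- !Rinv_pow by lra. apply Rinv_le_contravar. apply pow_lt; lra.
apply Rle_pow; auto.
Qed.

Lemma Pi_ge1 beta rho t x : 0 < beta -> 0 < x -> 1 <= Pi beta rho t x.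
Proof.
intros Hb Hx. assert (HD := DD_pos beta t x Hb Hx). unfold DD, Cx, uu in HD. unfold Pi.
assert (HP := PI_RGT_0).
assert (0 < sinh (2 * PI * x / beta)) by (apply sinh_pos; apply Rdiv_lt_0_compat; nra).
assert (0 <= PI * rho ^ 2 / (beta * x)) by (apply Rdiv_le_0_compat; [assert (0 <= rho^2) by apply pow2_ge_0; nra| nra]).
assert (0 <= sinh (2 * PI * x / beta) / (cosh (2 * PI * x / beta) - cos (2 * PI * t / beta))) by (apply Rdiv_le_0_compat; lra).
nra.
Qed.

Lemma inv_le1 a : 1 <= a -> Rabs (/ a) <= 1.
Proof. intros H. rewrite Rabs_right. rewrite <- Rinv_1. apply Rinv_le_contravar; lra.
  apply Rle_ge; left; apply Rinv_0_lt_compat; lra. Qed.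

Lemma dec_invPi beta rho tau : 0 < beta -> dec 0 (fun x => / Pi beta rho tau x).
Proof. intros Hb. apply dec_bound0 with 1 1. intros x Hx. apply inv_le1. apply Pi_ge1; lra. Qed.

Lemma dec_sin g : dec 0 (fun x => sin (g x)).
Proof. apply dec_bound0 with 1 0. intros. apply Rabs_le. apply SIN_bound. Qed.
Lemma dec_cos g : dec 0 (fun x => cos (g x)).
Proof. apply dec_bound0 with 1 0. intros. apply Rabs_le. apply COS_bound. Qed.


Lemma big_facts beta tau x : 0 < beta -> 3 * beta / (2*PI) <= x ->
  let C := Cx beta x in let S := Sx beta x in let D := DD beta tau x in
  0 < S /\ S <= C /\ C / 2 <= D /\ exp (2*PI/beta * x) / 2 <= C /\ Rabs (S - C) <= 1.
Proof.
intros Hb Hx C S D. assert (HP := PI_RGT_0).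
assert (Hy : 3 <= 2*PI*x/beta).
{ apply Rmult_le_reg_r with (beta / (2*PI)). apply Rdiv_lt_0_compat; lra.
  replace (2 * PI * x / beta * (beta / (2 * PI))) with x by (field; split; lra). 
  replace (3 * (beta / (2*PI))) with (3 * beta / (2*PI)) by (field; lra). lra. }
assert (HS : 0 < S) by (unfold S, Sx; apply sinh_pos; lra).
assert (HSC : S <= C) by (unfold S, C, Sx, Cx; apply sinh_le_cosh).
assert (HC2 : 2 <= C) by (assert (H := cosh_lb (2*PI*x/beta) ltac:(lra)); unfold C, Cx; lra).
assert (Hc := COS_bound (2*PI*tau/beta)).
split; auto. split; auto. split. unfold D, DD, uu. fold C. lra.
assert (E : 2*PI/beta * x = 2*PI*x/beta) by (field; lra).
split. unfold C, Cx, cosh. rewrite E. assert (0 < exp (- (2*PI*x/beta))) by apply exp_pos. lra.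
unfold S, C, Sx, Cx, sinh, cosh. replace ((exp (2 * PI * x / beta) - exp (- (2 * PI * x / beta))) / 2 -
   (exp (2 * PI * x / beta) + exp (- (2 * PI * x / beta))) / 2) with (- exp (- (2 * PI * x / beta))) by field.
rewrite Rabs_Ropp, Rabs_right. rewrite <- exp_0. left. apply exp_increasing. lra.
apply Rle_ge. left. apply exp_pos.
Qed.

Lemma dec_iD beta tau n : 0 < beta -> dec n (fun x => / DD beta tau x).
Proof.
intros Hb. assert (HP := PI_RGT_0).
apply dec_exp with (2*PI/beta) 4 (3 * beta / (2*PI)). apply Rdiv_lt_0_compat; lra.
intros x Hx. destruct (big_facts beta tau x Hb Hx) as (H1 & H2 & H3 & H4 & H5).
assert (0 < exp (2*PI/beta*x)) by apply exp_pos.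
rewrite Rabs_right.
replace (4 * / exp (2 * PI / beta * x)) with (/ (exp (2 * PI / beta * x) / 4)) by (field; lra).
apply Rinv_le_contravar; lra.
apply Rle_ge. left. apply Rinv_0_lt_compat. lra.
Qed.

Lemma dec_SD beta tau : 0 < beta -> dec 0 (fun x => Sx beta x * / DD beta tau x).
Proof.
intros Hb. apply dec_bound0 with 2 (3 * beta / (2*PI)). intros x Hx.
destruct (big_facts beta tau x Hb Hx) as (H1 & H2 & H3 & H4 & H5).
assert (0 < Cx beta x) by lra.
rewrite Rabs_right. apply Rmult_le_reg_r with (DD beta tau x). lra.
rewrite Rmult_assoc, Rinv_l by lra. lra.
apply Rle_ge. apply Rmult_le_pos. lra. left. apply Rinv_0_lt_compat. lra.
Qed.

Lemma dec_CD beta tau : 0 < beta -> dec 0 (fun x => Cx beta x * / DD beta tau x).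
Proof.
intros Hb. apply dec_bound0 with 2 (3 * beta / (2*PI)). intros x Hx.
destruct (big_facts beta tau x Hb Hx) as (H1 & H2 & H3 & H4 & H5).
assert (0 < Cx beta x) by lra.
rewrite Rabs_right. apply Rmult_le_reg_r with (DD beta tau x). lra.
rewrite Rmult_assoc, Rinv_l by lra. lra.
apply Rle_ge. apply Rmult_le_pos. lra. left. apply Rinv_0_lt_compat. lra.
Qed.

Lemma dec_SmC beta : 0 < beta -> dec 0 (fun x => Sx beta x - Cx beta x).
Proof.
intros Hb. apply dec_bound0 with 1 (3 * beta / (2*PI)). intros x Hx.
destruct (big_facts beta 0 x Hb Hx) as (H1 & H2 & H3 & H4 & H5). auto.
Qed.

Definition bnd0 (f : R -> R) := exists M, forall x, 0 < x <= 1 -> Rabs (f x) <= M.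

Lemma bnd0_good0 f : (forall x, 0 < x -> continuous f x) -> bnd0 f -> good0 f.
Proof. intros Hc [M H]. split; auto. exists M, 1. split. lra. auto. Qed.

Lemma bnd0_ext f g : bnd0 f -> (forall x, 0 < x -> f x = g x) -> bnd0 g.
Proof. intros [M H] E. exists M. intros x Hx. rewrite <- E by lra. auto. Qed.
Lemma bnd0_plus f g : bnd0 f -> bnd0 g -> bnd0 (fun x => f x + g x).
Proof. intros [M1 H1] [M2 H2]. exists (M1 + M2). intros x Hx.
  eapply Rle_trans. apply Rabs_triang. specialize (H1 x Hx). specialize (H2 x Hx). lra. Qed.
Lemma bnd0_opp f : bnd0 f -> bnd0 (fun x => - f x).
Proof. intros [M H]. exists M. intros x Hx. rewrite Rabs_Ropp. auto. Qed.
Lemma bnd0_minus f g : bnd0 f -> bnd0 g -> bnd0 (fun x => f x - g x).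
Proof. intros. unfold Rminus. apply bnd0_plus; auto. apply bnd0_opp; auto. Qed.
Lemma bnd0_mult f g : bnd0 f -> bnd0 g -> bnd0 (fun x => f x * g x).
Proof. intros [M1 H1] [M2 H2]. exists (M1 * M2). intros x Hx. rewrite Rabs_mult.
  apply Rmult_le_compat; auto; apply Rabs_pos. Qed.
Lemma bnd0_const c : bnd0 (fun _ => c).
Proof. exists (Rabs c). intros. lra. Qed.
Lemma bnd0_pow f n : bnd0 f -> bnd0 (fun x => f x ^ n).
Proof. intros Hf. induction n. simpl. apply bnd0_const. simpl. apply bnd0_mult; auto. Qed.
Lemma bnd0_id : bnd0 (fun x => x).
Proof. exists 1. intros x Hx. rewrite Rabs_right; lra. Qed.
Lemma bnd0_sin g : bnd0 (fun x => sin (g x)).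
Proof. exists 1. intros. apply Rabs_le. apply SIN_bound. Qed.
Lemma bnd0_cos g : bnd0 (fun x => cos (g x)).
Proof. exists 1. intros. apply Rabs_le. apply COS_bound. Qed.
Lemma bnd0_invPi beta rho tau : 0 < beta -> bnd0 (fun x => / Pi beta rho tau x).
Proof. intros Hb. exists 1. intros x Hx. apply inv_le1. apply Pi_ge1; lra. Qed.

Lemma small_facts beta x : 0 < beta -> 0 < x <= 1 ->
  0 <= Sx beta x <= exp (2*PI/beta) /\ 1 <= Cx beta x <= exp (2*PI/beta) /\
  Sx beta x / x <= 2*PI/beta * exp (2*PI/beta).
Proof.
intros Hb Hx. assert (HP := PI_RGT_0).
set (y := 2*PI*x/beta).
assert (Hy0 : 0 < y) by (unfold y; apply Rdiv_lt_0_compat; nra).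
assert (Hyk : y <= 2*PI/beta).
{ unfold y. unfold Rdiv. rewrite (Rmult_comm (2*PI) x), Rmult_assoc. 
  replace (2 * PI * / beta) with (1 * (2*PI*/beta)) at 2 by ring.
  apply Rmult_le_compat_r; [|lra]. apply Rmult_le_pos; [lra| left; apply Rinv_0_lt_compat; lra]. }
assert (Eyk : exp y <= exp (2*PI/beta)) by (destruct (Rle_lt_or_eq_dec _ _ Hyk) as [h|h]; [left; apply exp_increasing; auto| rewrite h; lra]).
assert (H1 := exp_ineq1_le (-y)). assert (H2 := exp_ineq1_le y).
assert (Hm : 0 < exp (-y)) by apply exp_pos.
assert (Hey : exp y * exp (-y) = 1) by (rewrite <- exp_plus; replace (y + - y) with 0 by ring; apply exp_0).
assert (Hmy : exp (-y) <= 1) by (rewrite <- exp_0; left; apply exp_increasing; lra).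
unfold Sx, Cx. fold y. unfold sinh, cosh.
split. split. lra. lra.
split. split. lra. lra.
assert (Hp1 : 0 <= (exp (-y) - (1 + - y)) * exp y) by (apply Rmult_le_pos; lra).
replace ((exp (-y) - (1 + - y)) * exp y) with (exp y * exp (-y) - exp y + y * exp y) in Hp1 by ring.
rewrite Hey in Hp1.
assert (Hye : y <= y * exp y) by (rewrite <- (Rmult_1_r y) at 1; apply Rmult_le_compat_l; lra).
assert (Hs : exp y - exp (-y) <= 2 * y * exp y) by lra.
assert (E : 2 * PI / beta = y / x) by (unfold y; field; split; lra).
apply Rle_trans with (2*PI/beta * exp y).
2: apply Rmult_le_compat_l; [apply Rlt_le; apply Rdiv_lt_0_compat; lra | auto].
rewrite E. apply Rmult_le_reg_r with x. lra.
unfold Rdiv. replace ((exp y - exp (- y)) * / 2 * / x * x) with ((exp y - exp (- y)) * / 2) by (field; lra).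
replace (y * / x * exp y * x) with (y * exp y) by (field; lra). lra.
Qed.

Lemma bnd0_S beta : 0 < beta -> bnd0 (Sx beta).
Proof. intros Hb. exists (exp (2*PI/beta)). intros x Hx. destruct (small_facts beta x Hb Hx) as (A & B & C).
  rewrite Rabs_right; lra. Qed.
Lemma bnd0_C beta : 0 < beta -> bnd0 (Cx beta).
Proof. intros Hb. exists (exp (2*PI/beta)). intros x Hx. destruct (small_facts beta x Hb Hx) as (A & B & C).
  rewrite Rabs_right; lra. Qed.
Lemma bnd0_Sx beta : 0 < beta -> bnd0 (fun x => Sx beta x * / x).
Proof. intros Hb. exists (2*PI/beta * exp (2*PI/beta)). intros x Hx. destruct (small_facts beta x Hb Hx) as (A & B & C).
  rewrite Rabs_right. apply C. apply Rle_ge. apply Rmult_le_pos. lra. left; apply Rinv_0_lt_compat; lra. Qed.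
Lemma bnd0_iD beta tau : 0 < beta -> uu beta tau < 1 -> bnd0 (fun x => / DD beta tau x).
Proof. intros Hb Hu. exists (/ (1 - uu beta tau)). intros x Hx. destruct (small_facts beta x Hb Hx) as (A & B & C).
  assert (HD : 1 - uu beta tau <= DD beta tau x) by (unfold DD; lra).
  rewrite Rabs_right. apply Rinv_le_contravar; lra. apply Rle_ge. left. apply Rinv_0_lt_compat. lra. Qed.

Lemma T1_eq beta rho tau x : 0 < beta -> 0 < x -> T1 beta rho tau x =
  4 * cos (2 * gb beta rho tau x) * (ft beta rho tau x * fr beta rho tau x) / (Pi beta rho tau x)^2.
Proof. intros. unfold T1. rewrite dtPi_eq, drPi_eq; auto. Qed.
Lemma T2_eq beta rho tau x : 0 < beta -> 0 < x -> T2 beta rho tau x =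
  - 2 * cos (2 * gb beta rho tau x) * ftr beta rho tau x / Pi beta rho tau x.
Proof. intros. unfold T2. rewrite dtrPi_eq; auto. Qed.
Lemma T3_eq beta rho tau x : 0 < beta -> 0 < x -> T3 beta rho tau x =
  2 * sin (2 * gb beta rho tau x) * (fr beta rho tau x)^2 / (Pi beta rho tau x)^2.
Proof. intros. unfold T3. rewrite drPi_eq; auto. Qed.
Lemma T4_eq beta rho tau x : 0 < beta -> 0 < x -> T4 beta rho tau x =
  - 2 * sin (2 * gb beta rho tau x) * (ft beta rho tau x)^2 / (Pi beta rho tau x)^2.
Proof. intros. unfold T4. rewrite dtPi_eq; auto. Qed.
Lemma T5_eq beta rho tau x : 0 < beta -> 0 < x -> T5 beta rho tau x =
  sin (2 * gb beta rho tau x) * ftt beta rho tau x / Pi beta rho tau x.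
Proof. intros. unfold T5. rewrite dttPi_eq; auto. Qed.
Lemma T6_eq beta rho tau x : 0 < beta -> 0 < x -> T6 beta rho tau x =
  - sin (2 * gb beta rho tau x) * frr beta rho tau x / Pi beta rho tau x.
Proof. intros. unfold T6. rewrite drrPi_eq; auto. Qed.

Lemma Pi_eq beta rho tau x : 0 < beta -> 0 < x ->
  Pi beta rho tau x = 1 + PI*rho^2/beta * (/ x * (Sx beta x * / DD beta tau x)).
Proof. intros Hb Hx. assert (HD := DD_pos beta tau x Hb Hx).
  unfold Pi, Sx, DD, Cx, uu in *. field. split; lra. Qed.

Ltac fieldx beta rho tau x Hb Hx :=
  let HD := fresh in assert (HD := DD_pos beta tau x Hb Hx);
  let HP := fresh in assert (HP := Pi_ge1 beta rho tau x Hb Hx);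
  field; repeat split; lra.

Ltac bnd0_auto := repeat first [ apply bnd0_Sx; assumption | apply bnd0_S; assumption | apply bnd0_C; assumption
  | apply bnd0_iD; assumption | apply bnd0_invPi; assumption | apply bnd0_id | apply bnd0_sin | apply bnd0_cos
  | apply bnd0_const | apply bnd0_plus | apply bnd0_minus | apply bnd0_opp | apply bnd0_mult | apply bnd0_pow ].

Lemma dec_ix0 : dec 0 (fun x => / x).
Proof. apply dec_weak. apply dec_inv_x. Qed.
Lemma dec_ix2 : dec 2 (fun x => / x * / x).
Proof. eapply dec_ext. apply (dec_inv_pow 2). intros. simpl. field. lra. Qed.

Ltac dec_auto := first [ assumption
  | apply dec_iD; assumption | apply dec_SD; assumption | apply dec_CD; assumption | apply dec_SmC; assumption
  | apply dec_invPi; assumption | apply dec_sin | apply dec_cos | apply dec_const | apply dec_inv_x | apply dec_ix0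
  | apply dec_ix2
  | apply dec_plus; dec_auto | apply dec_minus; dec_auto | apply dec_opp; dec_auto
  | apply dec_x; dec_auto
  | solve [apply dec_mult_r; dec_auto] | solve [apply dec_mult_l; dec_auto]
  | solve [apply (dec_mult 1 1); dec_auto] | solve [apply (dec_mult 2 2); dec_auto] ].


Lemma bnd_f1 beta rho tau : 0 < beta -> uu beta tau < 1 -> bnd0 (fun x => x^2 * T1 beta rho tau x).
Proof.
intros Hb Hc.
apply bnd0_ext with (fun x => 4 * cos (2 * gb beta rho tau x) *
  (PI*rho^2/beta * (Sx beta x * u1 beta tau * (/ DD beta tau x * / DD beta tau x))) *
  (PI*rho^2/beta * ((2*PI/beta) * (1 - Cx beta x * uu beta tau) * (/ DD beta tau x * / DD beta tau x)
       - (Sx beta x * / x) * / DD beta tau x)) * (/ Pi beta rho tau x)^2).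
- bnd0_auto.
- intros x Hx. rewrite T1_eq by auto. unfold ft, fr. fieldx beta rho tau x Hb Hx.
Qed.

Lemma bnd_f2 beta rho tau : 0 < beta -> uu beta tau < 1 -> bnd0 (fun x => x^2 * T2 beta rho tau x).
Proof.
intros Hb Hc.
apply bnd0_ext with (fun x => - 2 * cos (2 * gb beta rho tau x) *
  (PI*rho^2/beta * u1 beta tau * ((2*PI/beta) * Cx beta x * x * (/ DD beta tau x * / DD beta tau x)
     - Sx beta x * (/ DD beta tau x * / DD beta tau x)
     - 2 * (2*PI/beta) * (Sx beta x)^2 * x * (/ DD beta tau x * / DD beta tau x * / DD beta tau x)))
  * / Pi beta rho tau x).
- bnd0_auto.
- intros x Hx. rewrite T2_eq by auto. unfold ftr. fieldx beta rho tau x Hb Hx.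
Qed.

Lemma bnd_f3 beta rho tau : 0 < beta -> uu beta tau < 1 -> bnd0 (fun x => x^2 * T3 beta rho tau x).
Proof.
intros Hb Hc.
apply bnd0_ext with (fun x => 2 * sin (2 * gb beta rho tau x) *
  (PI*rho^2/beta * ((2*PI/beta) * (1 - Cx beta x * uu beta tau) * (/ DD beta tau x * / DD beta tau x)
       - (Sx beta x * / x) * / DD beta tau x))^2 * (/ Pi beta rho tau x)^2).
- bnd0_auto.
- intros x Hx. rewrite T3_eq by auto. unfold fr. fieldx beta rho tau x Hb Hx.
Qed.

Lemma bnd_f4 beta rho tau : 0 < beta -> uu beta tau < 1 -> bnd0 (fun x => x^2 * T4 beta rho tau x).
Proof.
intros Hb Hc.
apply bnd0_ext with (fun x => - 2 * sin (2 * gb beta rho tau x) *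
  (PI*rho^2/beta * (Sx beta x * u1 beta tau * (/ DD beta tau x * / DD beta tau x)))^2 * (/ Pi beta rho tau x)^2).
- bnd0_auto.
- intros x Hx. rewrite T4_eq by auto. unfold ft. fieldx beta rho tau x Hb Hx.
Qed.

Lemma bnd_f5 beta rho tau : 0 < beta -> uu beta tau < 1 -> bnd0 (fun x => x^2 * T5 beta rho tau x).
Proof.
intros Hb Hc.
apply bnd0_ext with (fun x => sin (2 * gb beta rho tau x) *
  (PI*rho^2/beta * (Sx beta x * x * (u2 beta tau * (/ DD beta tau x * / DD beta tau x)
      + 2 * (u1 beta tau)^2 * (/ DD beta tau x * / DD beta tau x * / DD beta tau x)))) * / Pi beta rho tau x).
- bnd0_auto.
- intros x Hx. rewrite T5_eq by auto. unfold ftt. fieldx beta rho tau x Hb Hx.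
Qed.

Lemma bnd_f6 beta rho tau : 0 < beta -> uu beta tau < 1 -> bnd0 (fun x => x^2 * T6 beta rho tau x).
Proof.
intros Hb Hc.
apply bnd0_ext with (fun x => - sin (2 * gb beta rho tau x) *
  (PI*rho^2/beta * (2 * (Sx beta x * / x) * / DD beta tau x
     + 2 * (2*PI/beta) * (Cx beta x * uu beta tau - 1) * (/ DD beta tau x * / DD beta tau x)
     + (2*PI/beta)^2 * Sx beta x * x * ((uu beta tau)^2 - 2 + Cx beta x * uu beta tau)
         * (/ DD beta tau x * / DD beta tau x * / DD beta tau x))) * / Pi beta rho tau x).
- bnd0_auto.
- intros x Hx. rewrite T6_eq by auto. unfold frr. fieldx beta rho tau x Hb Hx.
Qed.

Lemma dec_f_of_T (T : R -> R) : dec 4 T -> goodI (fun x => x^2 * T x).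
Proof. intros H. apply dec_goodI. apply dec_ext with (fun x => x * (x * T x)).
  apply dec_x. apply dec_x. auto. intros. ring. Qed.

Lemma dec_fr beta rho tau : 0 < beta -> dec 2 (fr beta rho tau).
Proof.
intros Hb. apply dec_ext with (fun x => PI*rho^2/beta * ((2*PI/beta) * (/ x) * (/ DD beta tau x *
  (/ DD beta tau x - uu beta tau * (Cx beta x * / DD beta tau x))) - (/ x * / x) * (Sx beta x * / DD beta tau x))).
- dec_auto.
- intros x Hx. assert (Hx' : 0 < x) by lra. unfold fr. fieldx beta rho tau x Hb Hx'.
Qed.

Lemma dec_ft beta rho tau : 0 < beta -> dec 4 (ft beta rho tau).
Proof.
intros Hb. apply dec_ext with (fun x => PI*rho^2/beta * u1 beta tau * ((Sx beta x * / DD beta tau x) * (/ DD beta tau x * / x))).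
- dec_auto.
- intros x Hx. assert (Hx' : 0 < x) by lra. unfold ft. fieldx beta rho tau x Hb Hx'.
Qed.

Lemma dec_ftr beta rho tau : 0 < beta -> dec 4 (ftr beta rho tau).
Proof.
intros Hb. apply dec_ext with (fun x => PI*rho^2/beta * u1 beta tau * ((2*PI/beta) * ((Cx beta x * / DD beta tau x) * (/ DD beta tau x * / x))
   - (Sx beta x * / DD beta tau x) * (/ DD beta tau x * (/ x * / x))
   - 2 * (2*PI/beta) * ((Sx beta x * / DD beta tau x) * (Sx beta x * / DD beta tau x)) * (/ DD beta tau x * / x))).
- dec_auto.
- intros x Hx. assert (Hx' : 0 < x) by lra. unfold ftr. fieldx beta rho tau x Hb Hx'.
Qed.

Lemma dec_ftt beta rho tau : 0 < beta -> dec 4 (ftt beta rho tau).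
Proof.
intros Hb. apply dec_ext with (fun x => PI*rho^2/beta * ((Sx beta x * / DD beta tau x) *
   (u2 beta tau + 2 * (u1 beta tau)^2 * / DD beta tau x) * (/ DD beta tau x * / x))).
- dec_auto.
- intros x Hx. assert (Hx' : 0 < x) by lra. unfold ftt. fieldx beta rho tau x Hb Hx'.
Qed.

Lemma goodI_f1 beta rho tau : 0 < beta -> goodI (fun x => x^2 * T1 beta rho tau x).
Proof.
intros Hb. apply dec_f_of_T.
apply dec_ext with (fun x => 4 * cos (2 * gb beta rho tau x) * (ft beta rho tau x * fr beta rho tau x) * (/ Pi beta rho tau x * / Pi beta rho tau x)).
- assert (H1 := dec_ft beta rho tau Hb). assert (H2 := dec_weak _ _ (dec_weak _ _ (dec_fr beta rho tau Hb))).
  dec_auto.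
- intros x Hx. rewrite T1_eq by lra. assert (Hx' : 0 < x) by lra. fieldx beta rho tau x Hb Hx'.
Qed.

Lemma goodI_f2 beta rho tau : 0 < beta -> goodI (fun x => x^2 * T2 beta rho tau x).
Proof.
intros Hb. apply dec_f_of_T.
apply dec_ext with (fun x => - 2 * cos (2 * gb beta rho tau x) * ftr beta rho tau x * / Pi beta rho tau x).
- assert (H1 := dec_ftr beta rho tau Hb). dec_auto.
- intros x Hx. rewrite T2_eq by lra. assert (Hx' : 0 < x) by lra. fieldx beta rho tau x Hb Hx'.
Qed.

Lemma goodI_f3 beta rho tau : 0 < beta -> goodI (fun x => x^2 * T3 beta rho tau x).
Proof.
intros Hb. apply dec_f_of_T.
apply dec_ext with (fun x => 2 * sin (2 * gb beta rho tau x) * (fr beta rho tau x * fr beta rho tau x) * (/ Pi beta rho tau x * / Pi beta rho tau x)).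
- assert (H1 := dec_fr beta rho tau Hb). dec_auto.
- intros x Hx. rewrite T3_eq by lra. assert (Hx' : 0 < x) by lra. fieldx beta rho tau x Hb Hx'.
Qed.

Lemma goodI_f4 beta rho tau : 0 < beta -> goodI (fun x => x^2 * T4 beta rho tau x).
Proof.
intros Hb. apply dec_f_of_T.
apply dec_ext with (fun x => - 2 * sin (2 * gb beta rho tau x) * (ft beta rho tau x * ft beta rho tau x) * (/ Pi beta rho tau x * / Pi beta rho tau x)).
- assert (H1 := dec_ft beta rho tau Hb). assert (H2 := dec_weak _ _ (dec_weak _ _ (dec_weak _ _ (dec_weak _ _ H1)))). dec_auto.
- intros x Hx. rewrite T4_eq by lra. assert (Hx' : 0 < x) by lra. fieldx beta rho tau x Hb Hx'.
Qed.

Lemma goodI_f5 beta rho tau : 0 < beta -> goodI (fun x => x^2 * T5 beta rho tau x).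
Proof.
intros Hb. apply dec_f_of_T.
apply dec_ext with (fun x => sin (2 * gb beta rho tau x) * ftt beta rho tau x * / Pi beta rho tau x).
- assert (H1 := dec_ftt beta rho tau Hb). dec_auto.
- intros x Hx. rewrite T5_eq by lra. assert (Hx' : 0 < x) by lra. fieldx beta rho tau x Hb Hx'.
Qed.

Lemma goodI_f6 beta rho tau (ginf : R) : 0 < beta ->
  dec 1 (fun x => sin (2 * ginf) - sin (2 * gb beta rho tau x)) ->
  goodI (fun r => r^2 * T6 beta rho tau r + 2 * PI * rho ^ 2 / beta * sin (2 * ginf) * / r).
Proof.
intros Hb Hr. apply dec_goodI.
apply dec_ext with (fun x => 2 * (PI*rho^2/beta) * ((/ x) * (sin (2 * ginf) - sin (2 * gb beta rho tau x)))
  - sin (2 * gb beta rho tau x) * (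
     2 * (PI*rho^2/beta) * ((/ x) * ((Sx beta x - Cx beta x + uu beta tau) * / DD beta tau x))
     + PI*rho^2/beta * (2 * (2*PI/beta) * (/ DD beta tau x * (uu beta tau * (Cx beta x * / DD beta tau x) - / DD beta tau x))
         + (2*PI/beta)^2 * ((uu beta tau)^2 - 2) * (x * ((Sx beta x * / DD beta tau x) * (/ DD beta tau x * / DD beta tau x)))
         + (2*PI/beta)^2 * uu beta tau * (x * ((Sx beta x * / DD beta tau x) * (Cx beta x * / DD beta tau x) * / DD beta tau x)))
     - 2 * (PI*rho^2/beta)^2 * ((/ x * / x) * (Sx beta x * / DD beta tau x))) * / Pi beta rho tau x).
- dec_auto.
- intros x Hx. assert (Hx' : 0 < x) by lra. rewrite T6_eq by lra. unfold frr.
  assert (HD := DD_pos beta tau x Hb Hx'). assert (HP := Pi_ge1 beta rho tau x Hb Hx').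
  rewrite Pi_eq in * by lra. unfold DD in *. field. repeat split; try lra.
  replace (beta * (x * (Cx beta x - uu beta tau)) + PI * rho ^ 2 * Sx beta x) with
    ((beta * x * (Cx beta x - uu beta tau)) * (1 + PI * rho ^ 2 / beta * (/ x * (Sx beta x * / (Cx beta x - uu beta tau))))) by (field; repeat split; lra).
  apply Rgt_not_eq. apply Rmult_lt_0_compat; [|lra]. apply Rmult_lt_0_compat; [nra|lra].
Qed.

Lemma abs_sin_le z : Rabs (sin z) <= Rabs z.
Proof.
assert (Hpos : forall z, 0 < z -> Rabs (sin z) <= z).
{ intros w Hw. assert (H1 := sin_lt_x w Hw). apply Rabs_le. split; [|lra].
  destruct (Rle_dec 1 w). assert (H := SIN_bound w). lra.
  assert (0 <= sin w) by (apply sin_ge_0; [lra| assert (H := PI2_3_2); lra]). lra. }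
destruct (Rtotal_order z 0) as [H|[H|H]].
- assert (E : sin z = - sin (- z)) by (rewrite sin_neg; ring).
  rewrite E, Rabs_Ropp, (Rabs_left z) by lra. apply Hpos; lra.
- subst. rewrite sin_0. lra.
- rewrite (Rabs_right z) by lra. apply Hpos; lra.
Qed.

Lemma abs_sin_diff a b : Rabs (sin a - sin b) <= Rabs (a - b).
Proof.
rewrite form4. rewrite !Rabs_mult. assert (H := abs_sin_le ((a - b)/2)).
assert (Hc : Rabs (cos ((a + b) / 2)) <= 1) by (apply Rabs_le; apply COS_bound).
replace (Rabs (a - b)) with (Rabs 2 * Rabs ((a - b) / 2)).
rewrite (Rabs_right 2) by lra.
assert (0 <= Rabs (sin ((a - b) / 2))) by apply Rabs_pos.
assert (0 <= Rabs (cos ((a + b) / 2))) by apply Rabs_pos. nra.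
rewrite <- Rabs_mult. f_equal. field.
Qed.

Lemma dec_rate beta rho tau (ginf : R) : 0 < beta -> cos (2*PI*(tau/beta)) < 1 ->
  is_lim (gb beta rho tau) p_infty ginf ->
  dec 1 (fun x => sin (2 * ginf) - sin (2 * gb beta rho tau x)).
Proof.
intros Hb Hc Hl.
set (K := Rabs (- PI^2 * (rho/beta)^2 * sin (2*PI*(tau/beta))) * (4 / PI) * beta).
exists (2 * K), (Rmax beta 1). split. apply Rmax_r.
intros x Hx. assert (Hbx : beta <= x) by (eapply Rle_trans; [apply Rmax_l|eauto]).
assert (H1x : 1 <= x) by (eapply Rle_trans; [apply Rmax_r|eauto]).
eapply Rle_trans. apply abs_sin_diff.
replace (2 * ginf - 2 * gb beta rho tau x) with (2 * (ginf - gb beta rho tau x)) by ring.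
rewrite Rabs_mult, (Rabs_right 2) by lra. rewrite Rabs_minus_sym.
assert (H := gb_lim beta rho tau ginf x Hb Hbx Hc Hl).
replace (2 * K / x ^ 1) with (2 * (K / x)) by (simpl; field; lra).
apply Rmult_le_compat_l. lra. unfold K. auto.
Qed.

Lemma contR_pow (f : R -> R) x n : continuous f x -> continuous (fun y => f y ^ n) x.
Proof. intros H. induction n. simpl. apply contR_const. simpl. apply contR_mult; auto. Qed.

Ltac nzD beta tau x Hb Hx :=
  let HD := fresh in assert (HD := DD_pos beta tau x Hb Hx);
  unfold DD, Cx, uu in HD; unfold sinh, cosh in HD; unfold Rdiv in HD;
  repeat split; try lra; repeat (apply Rmult_integral_contrapositive_currified; try lra).

Ltac cont_expl beta tau x Hb Hx :=
  apply cont_of_der; unfold fr, ft, ftr, ftt, frr, DD, Sx, Cx, uu, u1, u2; unfold sinh, cosh; unfold Rdiv;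
  auto_derive; nzD beta tau x Hb Hx.

Lemma cont_ft beta rho tau x : 0 < beta -> 0 < x -> continuous (fun x => ft beta rho tau x) x.
Proof. intros Hb Hx. cont_expl beta tau x Hb Hx. Qed.
Lemma cont_fr beta rho tau x : 0 < beta -> 0 < x -> continuous (fun x => fr beta rho tau x) x.
Proof. intros Hb Hx. cont_expl beta tau x Hb Hx. Qed.
Lemma cont_ftr beta rho tau x : 0 < beta -> 0 < x -> continuous (fun x => ftr beta rho tau x) x.
Proof. intros Hb Hx. cont_expl beta tau x Hb Hx. Qed.
Lemma cont_ftt beta rho tau x : 0 < beta -> 0 < x -> continuous (fun x => ftt beta rho tau x) x.
Proof. intros Hb Hx. cont_expl beta tau x Hb Hx. Qed.
Lemma cont_frr beta rho tau x : 0 < beta -> 0 < x -> continuous (fun x => frr beta rho tau x) x.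
Proof. intros Hb Hx. cont_expl beta tau x Hb Hx. Qed.
Lemma cont_invPi beta rho tau x : 0 < beta -> 0 < x -> continuous (fun x => / Pi beta rho tau x) x.
Proof. intros Hb Hx. apply contR_inv. apply cont_of_der. eexists. apply der_r; auto.
  assert (H := Pi_ge1 beta rho tau x Hb Hx). lra. Qed.
Lemma cont_cosg beta rho tau x : 0 < beta -> 0 < x -> cos (2*PI*(tau/beta)) < 1 ->
  continuous (fun x => cos (2 * gb beta rho tau x)) x.
Proof. intros Hb Hx Hc. apply (contR_comp (fun x => 2 * gb beta rho tau x) cos).
  apply contR_mult. apply contR_const. apply gb_cont; auto. apply cont_of_der. auto_derive. auto. Qed.
Lemma cont_sing beta rho tau x : 0 < beta -> 0 < x -> cos (2*PI*(tau/beta)) < 1 ->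
  continuous (fun x => sin (2 * gb beta rho tau x)) x.
Proof. intros Hb Hx Hc. apply (contR_comp (fun x => 2 * gb beta rho tau x) sin).
  apply contR_mult. apply contR_const. apply gb_cont; auto. apply cont_of_der. auto_derive. auto. Qed.

Ltac cont_auto := repeat (match goal with
 | |- continuous (fun r => cos (2 * gb _ _ _ r)) _ => apply cont_cosg; assumption
 | |- continuous (fun r => sin (2 * gb _ _ _ r)) _ => apply cont_sing; assumption
 | |- continuous (fun r => ft _ _ _ r) _ => apply cont_ft; assumption
 | |- continuous (fun r => fr _ _ _ r) _ => apply cont_fr; assumption
 | |- continuous (fun r => ftr _ _ _ r) _ => apply cont_ftr; assumption
 | |- continuous (fun r => ftt _ _ _ r) _ => apply cont_ftt; assumption
 | |- continuous (fun r => frr _ _ _ r) _ => apply cont_frr; assumption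
 | |- continuous (fun r => / Pi _ _ _ r) _ => apply cont_invPi; assumption
 | |- continuous (ft _ _ _) _ => apply cont_ft; assumption
 | |- continuous (fr _ _ _) _ => apply cont_fr; assumption
 | |- continuous (ftr _ _ _) _ => apply cont_ftr; assumption
 | |- continuous (ftt _ _ _) _ => apply cont_ftt; assumption
 | |- continuous (frr _ _ _) _ => apply cont_frr; assumption
 | |- continuous (fun r => r) _ => apply contR_id
 | |- continuous (fun r => _ + _) _ => apply contR_plus
 | |- continuous (fun r => _ - _) _ => apply contR_minus
 | |- continuous (fun r => _ * _) _ => apply contR_mult
 | |- continuous (fun r => - _) _ => apply contR_opp
 | |- continuous (fun r => _ ^ _) _ => apply contR_pow
 | |- continuous (fun r => _) _ => apply contR_const
 end).

Ltac cont_start form :=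
  let x := fresh "x" in let Hx := fresh "Hx" in
  intros x Hx; apply contR_ext with form x; [ lra | | ];
  [ let y := fresh "y" in let Hy := fresh "Hy" in intros y Hy; apply Rabs_def2 in Hy;
    assert (Hy' : 0 < y) by lra | ].

Lemma cont_f1 beta rho tau : 0 < beta -> cos (2*PI*(tau/beta)) < 1 ->
  forall x, 0 < x -> continuous (fun r => r^2 * T1 beta rho tau r) x.
Proof.
intros Hb Hc.
cont_start (fun r => r^2 * (4 * cos (2 * gb beta rho tau r) * (ft beta rho tau r * fr beta rho tau r) * (/ Pi beta rho tau r * / Pi beta rho tau r))).
- rewrite T1_eq by lra. assert (HP := Pi_ge1 beta rho tau y Hb Hy'). field. lra.
- cont_auto.
Qed.

Lemma cont_f2 beta rho tau : 0 < beta -> cos (2*PI*(tau/beta)) < 1 ->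
  forall x, 0 < x -> continuous (fun r => r^2 * T2 beta rho tau r) x.
Proof.
intros Hb Hc.
cont_start (fun r => r^2 * (- 2 * cos (2 * gb beta rho tau r) * ftr beta rho tau r * / Pi beta rho tau r)).
- rewrite T2_eq by lra. assert (HP := Pi_ge1 beta rho tau y Hb Hy'). field. lra.
- cont_auto.
Qed.
Lemma cont_f3 beta rho tau : 0 < beta -> cos (2*PI*(tau/beta)) < 1 ->
  forall x, 0 < x -> continuous (fun r => r^2 * T3 beta rho tau r) x.
Proof.
intros Hb Hc.
cont_start (fun r => r^2 * (2 * sin (2 * gb beta rho tau r) * (fr beta rho tau r * fr beta rho tau r) * (/ Pi beta rho tau r * / Pi beta rho tau r))).
- rewrite T3_eq by lra. assert (HP := Pi_ge1 beta rho tau y Hb Hy'). field. lra.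
- cont_auto.
Qed.
Lemma cont_f4 beta rho tau : 0 < beta -> cos (2*PI*(tau/beta)) < 1 ->
  forall x, 0 < x -> continuous (fun r => r^2 * T4 beta rho tau r) x.
Proof.
intros Hb Hc.
cont_start (fun r => r^2 * (- 2 * sin (2 * gb beta rho tau r) * (ft beta rho tau r * ft beta rho tau r) * (/ Pi beta rho tau r * / Pi beta rho tau r))).
- rewrite T4_eq by lra. assert (HP := Pi_ge1 beta rho tau y Hb Hy'). field. lra.
- cont_auto.
Qed.
Lemma cont_f5 beta rho tau : 0 < beta -> cos (2*PI*(tau/beta)) < 1 ->
  forall x, 0 < x -> continuous (fun r => r^2 * T5 beta rho tau r) x.
Proof.
intros Hb Hc.
cont_start (fun r => r^2 * (sin (2 * gb beta rho tau r) * ftt beta rho tau r * / Pi beta rho tau r)).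
- rewrite T5_eq by lra. assert (HP := Pi_ge1 beta rho tau y Hb Hy'). field. lra.
- cont_auto.
Qed.
Lemma cont_f6 beta rho tau : 0 < beta -> cos (2*PI*(tau/beta)) < 1 ->
  forall x, 0 < x -> continuous (fun r => r^2 * T6 beta rho tau r) x.
Proof.
intros Hb Hc.
cont_start (fun r => r^2 * (- sin (2 * gb beta rho tau r) * frr beta rho tau r * / Pi beta rho tau r)).
- rewrite T6_eq by lra. assert (HP := Pi_ge1 beta rho tau y Hb Hy'). field. lra.
- cont_auto.
Qed.

Lemma degen_zero beta rho tau : 0 < beta -> sin (2 * PI * tau / beta) = 0 ->
  forall x, 0 < x ->
  x^2 * T1 beta rho tau x = 0 /\ x^2 * T2 beta rho tau x = 0 /\ x^2 * T3 beta rho tau x = 0 /\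
  x^2 * T4 beta rho tau x = 0 /\ x^2 * T5 beta rho tau x = 0 /\ x^2 * T6 beta rho tau x = 0.
Proof.
intros Hb Hs x Hx.
assert (Hu : u1 beta tau = 0) by (unfold u1; rewrite Hs; ring).
assert (Hg : gb beta rho tau x = 0) by (apply gb_zero; auto).
unfold T1, T2, T3, T4, T5, T6. rewrite Hg, dtPi_eq, dtrPi_eq by auto.
unfold ft, ftr. rewrite Hu. replace (2 * 0) with 0 by ring. rewrite sin_0.
repeat split; unfold Rdiv; ring.
Qed.

Theorem proposition5 (beta rho tau : R) (Hbeta : 0 < beta) (Hrho : 0 < rho)
  (ginf : R)
  (Hginf : is_lim (fun r => gb beta rho tau r) p_infty ginf) :
  ex_RInt_gen (fun r => r ^ 2 * T1 beta rho tau r) (at_right 0) (Rbar_locally p_infty) /\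
  ex_RInt_gen (fun r => r ^ 2 * T2 beta rho tau r) (at_right 0) (Rbar_locally p_infty) /\
  ex_RInt_gen (fun r => r ^ 2 * T3 beta rho tau r) (at_right 0) (Rbar_locally p_infty) /\
  ex_RInt_gen (fun r => r ^ 2 * T4 beta rho tau r) (at_right 0) (Rbar_locally p_infty) /\
  ex_RInt_gen (fun r => r ^ 2 * T5 beta rho tau r) (at_right 0) (Rbar_locally p_infty) /\
  ex_RInt_gen (fun r => r ^ 2 * T6 beta rho tau r) (at_right 0) (at_point beta) /\
  ex_RInt_gen
    (fun r => r ^ 2 * T6 beta rho tau r + 2 * PI * rho ^ 2 / beta * sin (2 * ginf) * / r)
    (at_point beta) (Rbar_locally p_infty) /\
  (exists R0 C : R, forall Rr : R, R0 <= Rr ->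
     exists v : R,
       is_RInt_gen (fun r => r ^ 2 * T6 beta rho tau r) (at_right 0) (at_point Rr) v /\
       Rabs (v - (- (2 * PI * rho ^ 2 / beta) * sin (2 * ginf) * ln Rr)) <= C).
Proof.
destruct (Req_dec (sin (2 * PI * tau / beta)) 0) as [Hs|Hs].
- assert (Hz := degen_zero beta rho tau Hbeta Hs).
  assert (Hgi : ginf = 0).
  { apply is_lim_unique in Hginf.
    rewrite (Lim_ext (fun _ => 0) (fun r => gb beta rho tau r)) in Hginf by (intros; symmetry; apply gb_zero; auto).
    rewrite Lim_const in Hginf. injection Hginf; auto. }
  subst ginf. replace (2 * 0) with 0 by ring. rewrite sin_0.
  apply (final _ _ _ _ _ _ beta (2 * PI * rho ^ 2 / beta) 0 Hbeta);
  (first [apply (fun f H => proj1 (good_zero f H)) | apply (fun f H => proj2 (good_zero f H))]);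
  intros x Hx; destruct (Hz x Hx) as (A1 & A2 & A3 & A4 & A5 & A6); auto;
  rewrite A6; ring.
- assert (Hc1 : cos (2 * PI * (tau / beta)) < 1).
  { replace (2 * PI * (tau / beta)) with (2 * PI * tau / beta) by (field; lra).
    assert (H := sin2_cos2 (2 * PI * tau / beta)). unfold Rsqr in H.
    assert (0 < sin (2 * PI * tau / beta) * sin (2 * PI * tau / beta)).
    { assert (H3 := Rsqr_pos_lt _ Hs). unfold Rsqr in H3. auto. }
    assert (H2 := COS_bound (2 * PI * tau / beta)). nra. }
  assert (Hc2 : uu beta tau < 1).
  { unfold uu. replace (2 * PI * tau / beta) with (2 * PI * (tau / beta)) by (field; lra). auto. }
  apply (final _ _ _ _ _ _ beta (2 * PI * rho ^ 2 / beta) (sin (2 * ginf)) Hbeta).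
  + apply bnd0_good0. apply cont_f1; auto. apply bnd_f1; auto.
  + apply goodI_f1; auto.
  + apply bnd0_good0. apply cont_f2; auto. apply bnd_f2; auto.
  + apply goodI_f2; auto.
  + apply bnd0_good0. apply cont_f3; auto. apply bnd_f3; auto.
  + apply goodI_f3; auto.
  + apply bnd0_good0. apply cont_f4; auto. apply bnd_f4; auto.
  + apply goodI_f4; auto.
  + apply bnd0_good0. apply cont_f5; auto. apply bnd_f5; auto.
  + apply goodI_f5; auto.
  + apply bnd0_good0. apply cont_f6; auto. apply bnd_f6; auto.
  + apply goodI_f6; auto. apply dec_rate; auto.
Qed.
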